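(* Suppose $1/n\ll\varepsilon\ll\varepsilon_1\ll\eta_1\ll\tau\ll\varepsilon_3\ll\eta_2\ll 1$ and let $G$ be an $\varepsilon$-extremal digraph on $n$ vertices with $\delta^0(G)\geq n/2$. Then there is a partition of $V(G)$ into sets $A,B,S,T$ of sizes $a,b,s,t$ satisfying one of the following: (1) conditions (P1)–(P7); (2) conditions (Q1)–(Q8) together with $a\leq b$; (3) conditions (R1)–(R9).
   Context: Digraphs have no loops and at most one edge in each direction between two vertices. $\delta^0(G)$ is the minimum semidegree (minimum over vertices of the minimum of in- and outdegree). For $X\subseteq V(G)$ and a vertex $x$, $d^+_X(x)=|N^+(x)\cap X|$, $d^-_X(x)=|N^-(x)\cap X|$, and $d^\pm_X(x)\geq c$ means both $d^+_X(x)\geq c$ and $d^-_X(x)\geq c$. $E(X,Y)$ is the set of edges $xy$ with $x\in X,y\in Y$, $e(X,Y)=|E(X,Y)|$; $G[X]$ is the induced subdigraph; $G[X,Y]$ is the digraph on $X\cup Y$ with edge set $E(X,Y)\cup E(Y,X)$. $G$ is $\varepsilon$-extremal if there is a partition $A,B,S,T$ of $V(G)$ with sizes $a,b,s,t$ such that $|a-b|,|s-t|\leq1$ and $e(A\cup S,A\cup T)<\varepsilon n^2$. Conditions for a partition $A,B,S,T$ of $V(G)$ with sizes $a,b,s,t$: (P1) $\lfloor n/2\rfloor-\varepsilon_3 n\leq s,t\leq \lceil n/2\rceil+\varepsilon_3 n$; (P2) $\delta^0(G[S]),\delta^0(G[T])\geq \eta_2 n$; (P3) $d^\pm_S(x)\geq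 n/2-\varepsilon_3 n$ for all but at most $\varepsilon_3 n$ vertices $x\in S$; (P4) $d^\pm_T(x)\geq n/2-\varepsilon_3 n$ for all but at most $\varepsilon_3 n$ vertices $x\in T$; (P5) $a+b\leq\varepsilon_3 n$; (P6) for all $x\in A$: $d^-_T(x),d^+_S(x)>n/2-3\eta_2 n$ and $d^-_S(x),d^+_T(x)\leq 3\eta_2 n$; (P7) for all $x\in B$: $d^-_S(x),d^+_T(x)>n/2-3\eta_2 n$ and $d^-_T(x),d^+_S(x)\leq 3\eta_2 n$. (Q1) $\lfloor n/2\rfloor-\varepsilon_3 n\leq a,b\leq\lceil n/2\rceil+\varepsilon_3 n$; (Q2) $\delta^0(G[A,B])\geq n/50$; (Q3) $d^\pm_B(x)\geq n/2-\varepsilon_3 n$ for all but at most $\varepsilon_3 n$ vertices $x\in A$; (Q4) $d^\pm_A(x)\geq n/2-\varepsilon_3 n$ for all but at most $\varepsilon_3 n$ vertices $x\in B$; (Q5) $s+t\leq\varepsilon_3 n$; (Q6) $d^-_A(x),d^+_B(x)\geq n/50$ for all $x\in S$; (Q7) $d^-_B(x),d^+_A(x)\geq n/50$ for all $x\in T$; (Q8) if $a<b$, then $d^\pm_B(x)<n/20$ for all $x\in B$ (i.e. both $d^+_B(x),d^-_B(x)<n/20$), $d^-_B(x)<n/20$ for all $x\in S$ and $d^+_B(x)<n/20$ for all $x\in T$. (R1) $a,b,s,t\geq\tau n$; (R2) $|a-b|,|s-t|\leq\varepsilon_1 n$; (R3) $\delta^0(G[A,B])\geq\eta_1 n$; (R4)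 $d^+_{B\cup S}(x),d^-_{A\cup S}(x)\geq\eta_1 n$ for all $x\in S$; (R5) $d^+_{A\cup T}(x),d^-_{B\cup T}(x)\geq\eta_1 n$ for all $x\in T$; (R6) $d^\pm_B(x)\geq b-\varepsilon^{1/3}n$ for all but at most $\varepsilon_1 n$ vertices $x\in A$; (R7) $d^\pm_A(x)\geq a-\varepsilon^{1/3}n$ for all but at most $\varepsilon_1 n$ vertices $x\in B$; (R8) $d^+_{B\cup S}(x)\geq b+s-\varepsilon^{1/3}n$ and $d^-_{A\cup S}(x)\geq a+s-\varepsilon^{1/3}n$ for all but at most $\varepsilon_1 n$ vertices $x\in S$; (R9) $d^+_{A\cup T}(x)\geq a+t-\varepsilon^{1/3}n$ and $d^-_{B\cup T}(x)\geq b+t-\varepsilon^{1/3}n$ for all but at most $\varepsilon_1 n$ vertices $x\in T$. The hierarchy $\alpha\ll\beta$ means the statement holds whenever $\alpha$ is sufficiently small as a function of $\beta$; constants are chosen from right to left. *)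

(* Defs.v *)
From Stdlib Require Import Reals.
From mathcomp Require Import all_boot.
Local Open Scope R_scope.

Set Implicit Arguments.
Unset Strict Implicit.
Unset Printing Implicit Defensive.

Section Digraph.
Variables (V : finType) (E : rel V).
(* A digraph is V with an irreflexive edge relation E (x -> y iff E x y);
   a relation automatically has at most one edge per direction. *)

Definition nR : R := INR #|V|.

Definition dout (X : {set V}) (x : V) : nat := #|[set y in X | E x y]|.
Definition din  (X : {set V}) (x : V) : nat := #|[set y in X | E y x]|.

Definition eXY (X Y : {set V}) : nat :=
  #|[set p : V * V | [&& p.1 \in X, p.2 \in Y & E p.1 p.2]]|.

(* A,B,S,T is a partition of V(G) (parts may be empty) *)
Definition partition4 (A B S T : {set V}) : Prop :=
  [&& [disjoint A & B], [disjoint A & S], [disjoint A & T],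
      [disjoint B & S], [disjoint B & T] & [disjoint S & T]] /\
  A :|: B :|: S :|: T = setT.

Definition extremal (eps : R) : Prop :=
  exists A B S T : {set V}, partition4 A B S T /\
    (Rabs (INR #|A| - INR #|B|) <= 1) /\
    (Rabs (INR #|S| - INR #|T|) <= 1) /\
    (INR (eXY (A :|: S) (A :|: T)) < eps * nR ^ 2).

Definition all_but (X : {set V}) (k : R) (P : V -> Prop) : Prop :=
  exists Y : {set V}, Y \subset X /\ (INR #|Y| <= k) /\
    forall x, x \in X -> x \notin Y -> P x.

Definition dpm_ge (X : {set V}) (x : V) (c : R) : Prop :=
  (c <= INR (dout X x)) /\ (c <= INR (din X x)).
End Digraph.

Definition min_semideg_ge (V : finType) (U : {set V}) (F : rel V) (c : R) : Prop :=
  forall x, x \in U ->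
    (c <= INR #|[set y in U | F x y]|) /\ (c <= INR #|[set y in U | F y x]|).

Definition bip_rel (V : finType) (E : rel V) (X Y : {set V}) : rel V :=
  fun x y => E x y && (((x \in X) && (y \in Y)) || ((x \in Y) && (y \in X))).

Definition sub_semideg_ge (V : finType) (E : rel V) (X : {set V}) (c : R) :=
  min_semideg_ge X E c.
Definition bip_semideg_ge (V : finType) (E : rel V) (X Y : {set V}) (c : R) :=
  min_semideg_ge (X :|: Y) (bip_rel E X Y) c.

Section Conditions.
Variables (V : finType) (E : rel V) (A B S T : {set V}).
Let n := nR V.
Let a := INR #|A|.
Let b := INR #|B|.
Let s := INR #|S|.
Let t := INR #|T|.
Let nfl := INR (#|V|./2).
Let ncl := INR (uphalf #|V|).

Definition condP (eps3 eta2 : R) : Prop :=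
  (nfl - eps3 * n <= s <= ncl + eps3 * n) /\
  (nfl - eps3 * n <= t <= ncl + eps3 * n) /\
  sub_semideg_ge E S (eta2 * n) /\ sub_semideg_ge E T (eta2 * n) /\
  all_but S (eps3 * n) (fun x => dpm_ge E S x (n / 2 - eps3 * n)) /\
  all_but T (eps3 * n) (fun x => dpm_ge E T x (n / 2 - eps3 * n)) /\
  (a + b <= eps3 * n) /\
  (forall x, x \in A ->
     (n / 2 - 3 * eta2 * n < INR (din E T x)) /\
     (n / 2 - 3 * eta2 * n < INR (dout E S x)) /\
     (INR (din E S x) <= 3 * eta2 * n) /\
     (INR (dout E T x) <= 3 * eta2 * n)) /\
  (forall x, x \in B ->
     (n / 2 - 3 * eta2 * n < INR (din E S x)) /\
     (n / 2 - 3 * eta2 * n < INR (dout E T x)) /\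
     (INR (din E T x) <= 3 * eta2 * n) /\
     (INR (dout E S x) <= 3 * eta2 * n)).

Definition condQ (eps3 : R) : Prop :=
  (nfl - eps3 * n <= a <= ncl + eps3 * n) /\
  (nfl - eps3 * n <= b <= ncl + eps3 * n) /\
  bip_semideg_ge E A B (n / 50) /\
  all_but A (eps3 * n) (fun x => dpm_ge E B x (n / 2 - eps3 * n)) /\
  all_but B (eps3 * n) (fun x => dpm_ge E A x (n / 2 - eps3 * n)) /\
  (s + t <= eps3 * n) /\
  (forall x, x \in S ->
     (n / 50 <= INR (din E A x)) /\ (n / 50 <= INR (dout E B x))) /\
  (forall x, x \in T ->
     (n / 50 <= INR (din E B x)) /\ (n / 50 <= INR (dout E A x))) /\
  ((a < b) ->
     (forall x, x \in B ->
        (INR (dout E B x) < n / 20) /\ (INR (din E B x) < n / 20)) /\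
     (forall x, x \in S -> (INR (din E B x) < n / 20)) /\
     (forall x, x \in T -> (INR (dout E B x) < n / 20))).

Definition condR (eps eps1 eta1 tau : R) : Prop :=
  let e13 := Rpower eps (1 / 3) in
  (tau * n <= a) /\ (tau * n <= b) /\ (tau * n <= s) /\ (tau * n <= t) /\
  (Rabs (a - b) <= eps1 * n) /\ (Rabs (s - t) <= eps1 * n) /\
  bip_semideg_ge E A B (eta1 * n) /\
  (forall x, x \in S ->
     (eta1 * n <= INR (dout E (B :|: S) x)) /\
     (eta1 * n <= INR (din E (A :|: S) x))) /\
  (forall x, x \in T ->
     (eta1 * n <= INR (dout E (A :|: T) x)) /\
     (eta1 * n <= INR (din E (B :|: T) x))) /\
  all_but A (eps1 * n) (fun x => dpm_ge E B x (b - e13 * n)) /\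
  all_but B (eps1 * n) (fun x => dpm_ge E A x (a - e13 * n)) /\
  all_but S (eps1 * n) (fun x =>
     (b + s - e13 * n <= INR (dout E (B :|: S) x)) /\
     (a + s - e13 * n <= INR (din E (A :|: S) x))) /\
  all_but T (eps1 * n) (fun x =>
     (a + t - e13 * n <= INR (dout E (A :|: T) x)) /\
     (b + t - e13 * n <= INR (din E (B :|: T) x))).
End Conditions.

(* Main.v *)
Require Import Defs.
From Stdlib Require Import Reals Lra Lia Classical.
From mathcomp Require Import all_boot zify.
Local Open Scope R_scope.
Set Implicit Arguments.
Unset Strict Implicit.
Unset Printing Implicit Defensive.

Section Util.
Variables (V : finType) (E : rel V).

Definition nno (X : {set V}) x := #|[set y in X | ~~ E x y]|.
Definition nni (X : {set V}) y := #|[set x in X | ~~ E x y]|.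

Lemma card_sep (X : {set V}) (p : pred V) :
  #|[set y in X | p y]| = (\sum_(y in X) (p y : nat))%N.
Proof.
rewrite -sum1_card big_mkcond [RHS]big_mkcond /=.
apply: eq_bigr => y _; rewrite !inE; by case: (y \in X); case: (p y).
Qed.

Lemma dout_nno X x : (dout E X x + nno X x)%N = #|X|.
Proof.
rewrite /dout /nno !card_sep -big_split /= -sum1_card.
by apply: eq_bigr => y _; case: (E x y).
Qed.

Lemma din_nni X x : (din E X x + nni X x)%N = #|X|.
Proof.
rewrite /din /nni !card_sep -big_split /= -sum1_card.
by apply: eq_bigr => y _; case: (E y x).
Qed.

Lemma sep_sub (X Y : {set V}) (p : pred V) :
  X \subset Y -> (#|[set y in X | p y]| <= #|[set y in Y | p y]|)%N.
Proof.
move=> sXY; apply: subset_leq_card; apply/subsetP=> y; rewrite !inE.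
by case/andP=> yX ->; rewrite (subsetP sXY).
Qed.

Lemma sep_diff (X Y : {set V}) (p : pred V) :
  (#|[set y in Y | p y]| <= #|[set y in X | p y]| + #|Y :\: X|)%N.
Proof.
apply: leq_trans (leq_card_setU _ _).
apply: subset_leq_card; apply/subsetP=> y; rewrite !inE.
by case/andP=> -> ->; rewrite andbT orbC; case: (y \in X).
Qed.

Lemma card_diff (X Y : {set V}) : (#|Y| <= #|X| + #|Y :\: X|)%N.
Proof.
apply: leq_trans (leq_card_setU _ _).
apply: subset_leq_card; apply/subsetP=> y; rewrite !inE.
by move=> ->; rewrite andbT orbC; case: (y \in X).
Qed.

Lemma sum_swap (P Q : {set V}) :
  (\sum_(x in P) nno Q x)%N = (\sum_(y in Q) nni P y)%N.
Proof.
rewrite /nno /nni.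
under eq_bigr do rewrite card_sep.
rewrite exchange_big /=.
by under [RHS]eq_bigr do rewrite card_sep.
Qed.

Lemma eXY_sum (X Y : {set V}) : (\sum_(x in X) dout E Y x)%N = eXY E X Y.
Proof.
rewrite /eXY /dout.
under eq_bigr do rewrite card_sep.
rewrite -sum1_card.
pose F := fun x y => ([&& x \in X, y \in Y & E x y] : nat).
transitivity (\sum_(p : V * V) F p.1 p.2)%N; last first.
  rewrite [RHS]big_mkcond /=.
  by apply: eq_bigr => -[x y] _; rewrite !inE /F /=; case: ([&& _, _ & _]).
rewrite -(pair_bigA _ F) /=.
rewrite [LHS]big_mkcond /=; apply: eq_bigr => x _.
case xX: (x \in X).
  rewrite big_mkcond /=; apply: eq_bigr => y _; rewrite /F xX /=.
  by case: (y \in Y); case: (E x y).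
by rewrite big1 // => y _; rewrite /F xX.
Qed.

End Util.

Section Util2.
Variables (V : finType) (E : rel V).
Lemma sum_swap_e (P Q : {set V}) :
  (\sum_(x in P) dout E Q x)%N = (\sum_(y in Q) din E P y)%N.
Proof.
rewrite /dout /din.
under eq_bigr do rewrite card_sep.
rewrite exchange_big /=.
by under [RHS]eq_bigr do rewrite card_sep.
Qed.

Lemma sum_sub (A B : {set V}) (q : V -> nat) : A \subset B ->
  (\sum_(x in A) q x <= \sum_(x in B) q x)%N.
Proof.
move=> sAB; rewrite big_mkcond [X in (_ <= X)%N]big_mkcond /=.
apply: leq_sum => x _; case xA: (x \in A); last by [].
by rewrite (subsetP sAB).
Qed.

Lemma avgR (A : {set V}) (q : V -> nat) (t : R) :
  (forall x, x \in A -> t < INR (q x)) ->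
  INR #|A| * t <= INR (\sum_(x in A) q x).
Proof.
move=> h; rewrite -sum1_card.
apply: (big_rec2 (fun a b => INR a * t <= INR b)); first by simpl; lra.
move=> i y1 y2 iA IH; rewrite !plus_INR /=; have := h i iA; lra.
Qed.
End Util2.

Definition Rleb_def (a b : R) : bool := if Rle_dec a b then true else false.
Definition Rleb := locked Rleb_def.
Lemma RlebP a b : Rleb a b = true <-> a <= b.
Proof. rewrite /Rleb -lock /Rleb_def; case: Rle_dec => //. Qed.
Lemma RlebF a b : Rleb a b = false <-> b < a.
Proof. rewrite /Rleb -lock /Rleb_def; case: Rle_dec => h; split => //; lra. Qed.

Lemma leINR (m k : nat) : (m <= k)%N -> INR m <= INR k.
Proof. by move/leP; apply: le_INR. Qed.
Lemma INRM (m k : nat) : INR (m * k)%N = INR m * INR k.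
Proof. exact: mult_INR. Qed.
Lemma INRD (m k : nat) : INR (m + k)%N = INR m + INR k.
Proof. exact: plus_INR. Qed.
Lemma INR_add (m k : nat) : INR (m + k) = INR m + INR k.
Proof. exact: plus_INR. Qed.

Section Cls.
Variables (V : finType) (E : rel V).

Definition cls (f : V -> nat) (k : nat) := [set x | f x == k].
Definition dc f k x := dout E (cls f k) x.
Definition di f k x := din E (cls f k) x.

Lemma card_sepT (X : {set V}) (p : pred V) :
  #|[set y in X | p y]| = (\sum_y ((y \in X) && p y : nat))%N.
Proof. by rewrite card_sep big_mkcond /=; apply: eq_bigr => y _; case: (y \in X). Qed.

Lemma cardT_sum (X : {set V}) : #|X| = (\sum_y ((y \in X) : nat))%N.
Proof.
have -> : X = [set y in X | true] by apply/setP=> y; rewrite !inE andbT.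
by rewrite card_sepT; apply: eq_bigr => y _; rewrite inE andbT.
Qed.

Lemma dout_U f i j x : i != j ->
  dout E (cls f i :|: cls f j) x = (dc f i x + dc f j x)%N.
Proof.
move=> ij; rewrite /dc /dout !card_sepT -big_split /=; apply: eq_bigr => y _.
rewrite !inE; case: (E x y); rewrite ?andbF ?andbT //.
case Hi: (f y == i); case Hj: (f y == j) => //=.
by move/eqP: Hi => Hi; move/eqP: Hj => Hj; rewrite -Hi -Hj eqxx in ij.
Qed.

Lemma din_U f i j x : i != j ->
  din E (cls f i :|: cls f j) x = (di f i x + di f j x)%N.
Proof.
move=> ij; rewrite /di /din !card_sepT -big_split /=; apply: eq_bigr => y _.
rewrite !inE; case: (E y x); rewrite ?andbF ?andbT //.
case Hi: (f y == i); case Hj: (f y == j) => //=.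
by move/eqP: Hi => Hi; move/eqP: Hj => Hj; rewrite -Hi -Hj eqxx in ij.
Qed.

Lemma card_U f i j : i != j ->
  #|cls f i :|: cls f j| = (#|cls f i| + #|cls f j|)%N.
Proof.
move=> ij; rewrite !cardT_sum -big_split /=; apply: eq_bigr => y _.
rewrite !inE.
case Hi: (f y == i); case Hj: (f y == j) => //=.
by move/eqP: Hi => Hi; move/eqP: Hj => Hj; rewrite -Hi -Hj eqxx in ij.
Qed.

Lemma card_tot f : (forall x, f x < 4)%N ->
  #|V| = (#|cls f 0| + #|cls f 1| + #|cls f 2| + #|cls f 3|)%N.
Proof.
move=> h; rewrite -cardsT !cardT_sum -!big_split /=; apply: eq_bigr => y _.
rewrite !inE; move: (h y); case: (f y) => [|[|[|[|k]]]] //.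
Qed.

Lemma dout_tot f x : (forall x, f x < 4)%N ->
  dout E setT x = (dc f 0 x + dc f 1 x + dc f 2 x + dc f 3 x)%N.
Proof.
move=> h; rewrite /dc /dout !card_sepT -!big_split /=; apply: eq_bigr => y _.
rewrite !inE; case: (E x y); rewrite ?andbF ?andbT //.
move: (h y); case: (f y) => [|[|[|[|k]]]] //.
Qed.

Lemma din_tot f x : (forall x, f x < 4)%N ->
  din E setT x = (di f 0 x + di f 1 x + di f 2 x + di f 3 x)%N.
Proof.
move=> h; rewrite /di /din !card_sepT -!big_split /=; apply: eq_bigr => y _.
rewrite !inE; case: (E y x); rewrite ?andbF ?andbT //.
move: (h y); case: (f y) => [|[|[|[|k]]]] //.
Qed.

Lemma dc_card f k x : (dc f k x <= #|cls f k|)%N.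
Proof. by apply: subset_leq_card; apply/subsetP=> y; rewrite inE => /andP[]. Qed.
Lemma di_card f k x : (di f k x <= #|cls f k|)%N.
Proof. by apply: subset_leq_card; apply/subsetP=> y; rewrite inE => /andP[]. Qed.

Lemma part_cls f : (forall x, f x < 4)%N ->
  partition4 (cls f 0) (cls f 1) (cls f 2) (cls f 3).
Proof.
move=> h; split.
  by rewrite !disjoint_subset; repeat (apply/andP; split);
     apply/subsetP=> y; rewrite !inE => /eqP->.
apply/setP=> y; rewrite !inE; move: (h y); case: (f y) => [|[|[|[|k]]]] //.
Qed.

Lemma part_to_cls (A B S T : {set V}) : partition4 A B S T ->
  exists g : V -> nat, (forall x, g x < 4)%N /\
    A = cls g 0 /\ B = cls g 1 /\ S = cls g 2 /\ T = cls g 3.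
Proof.
move=> [/andP[dAB /andP[dAS /andP[dAT /andP[dBS /andP[dBT dST]]]]] cov].
exists (fun x => if x \in A then 0 else if x \in B then 1 else if x \in S then 2 else 3)%N.
split; first by move=> x; do 3 case: ifP => //.
have cv : forall x, [|| x \in A, x \in B, x \in S | x \in T].
  move=> x; have : x \in [set: V] by []. by rewrite -cov !inE -!orbA.
have nd : forall (X Y : {set V}) x, [disjoint X & Y] -> x \in X -> x \in Y -> False.
  move=> X Y x dXY xX xY; move: dXY; rewrite disjoint_subset => /subsetP/(_ x xX).
  by rewrite inE xY.
split; [|split; [|split]]; apply/setP=> x; rewrite inE; move: (cv x);
  case xA: (x \in A); case xB: (x \in B); case xS: (x \in S); case xT: (x \in T) => //=;
  solve [ by case: (nd _ _ _ dAB xA xB) | by case: (nd _ _ _ dAS xA xS)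
        | by case: (nd _ _ _ dAT xA xT) | by case: (nd _ _ _ dBS xB xS)
        | by case: (nd _ _ _ dBT xB xT) | by case: (nd _ _ _ dST xS xT) ].
Qed.

Section Pert.
Variables (f g : V -> nat) (D : {set V}).
Hypothesis fg : forall x, x \notin D -> f x = g x.

Lemma diff_D k : (#|cls g k :\: cls f k| <= #|D|)%N.
Proof.
apply: subset_leq_card; apply/subsetP=> y; rewrite !inE.
case yD: (y \in D) => //; by rewrite fg ?yD // => /andP[/negP].
Qed.

Lemma dc_pert k x : (dc g k x <= dc f k x + #|D|)%N.
Proof. apply: leq_trans (sep_diff (cls f k) (cls g k) (fun y => E x y)) _; by rewrite leq_add2l diff_D. Qed.
Lemma di_pert k x : (di g k x <= di f k x + #|D|)%N.
Proof. apply: leq_trans (sep_diff (cls f k) (cls g k) (fun y => E y x)) _; by rewrite leq_add2l diff_D. Qed.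
Lemma card_pert k : (#|cls g k| <= #|cls f k| + #|D|)%N.
Proof. apply: leq_trans (card_diff (cls f k) _) _; by rewrite leq_add2l diff_D. Qed.
End Pert.

End Cls.

Definition sX (V : finType) (g : V -> nat) := cls g 0 :|: cls g 2.
Definition sY (V : finType) (g : V -> nat) := cls g 0 :|: cls g 3.
Definition sX' (V : finType) (g : V -> nat) := cls g 1 :|: cls g 2.
Definition sY' (V : finType) (g : V -> nat) := cls g 1 :|: cls g 3.

Section Struct.
Variables (V : finType) (E : rel V) (g : V -> nat).
Hypothesis g4 : forall x, (g x < 4)%N.
Hypothesis b01 : (#|cls g 0| <= #|cls g 1| + 1)%N.
Hypothesis b10 : (#|cls g 1| <= #|cls g 0| + 1)%N.
Hypothesis b23 : (#|cls g 2| <= #|cls g 3| + 1)%N.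
Hypothesis b32 : (#|cls g 3| <= #|cls g 2| + 1)%N.
Hypothesis dego : forall x, (#|V| <= 2 * dout E setT x)%N.
Hypothesis degi : forall x, (#|V| <= 2 * din E setT x)%N.

Lemma pt1 x : (nno E (sX' g) x <= 1 + dout E (sY g) x)%N.
Proof.
have h1 := dout_nno E (sX' g) x.
rewrite /sX' /sY !dout_U // card_U // in h1 *.
have h2 := dego x; rewrite (dout_tot E x g4) (card_tot g4) in h2.
lia.
Qed.

Lemma pt2 x : (nni E (sY' g) x <= 1 + din E (sX g) x)%N.
Proof.
have h1 := din_nni E (sY' g) x.
rewrite /sY' /sX !din_U // card_U // in h1 *.
have h2 := degi x; rewrite (din_tot E x g4) (card_tot g4) in h2.
lia.
Qed.

Lemma R1_bound :
  (\sum_(x in sX g) nno E (sX' g) x <= #|sX g| + eXY E (sX g) (sY g))%N.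
Proof.
rewrite -eXY_sum -sum1_card -big_split /=.
by apply: leq_sum => x _; apply: pt1.
Qed.

Lemma R2_bound :
  (\sum_(x in sY g) nni E (sY' g) x <= #|sY g| + eXY E (sX g) (sY g))%N.
Proof.
rewrite -eXY_sum sum_swap_e -sum1_card -big_split /=.
by apply: leq_sum => x _; apply: pt2.
Qed.

Variable t : R.
Definition Z1 := [set x in sX g | ~~ Rleb (INR (nno E (sX' g) x)) t].
Definition Z2 := [set x in sY' g | ~~ Rleb (INR (nno E (sY g) x)) t].
Definition Z3 := [set x in sY g | ~~ Rleb (INR (nni E (sY' g) x)) t].
Definition Z4 := [set x in sX' g | ~~ Rleb (INR (nni E (sX g) x)) t].
Definition sZ := Z1 :|: Z2 :|: Z3 :|: Z4.

Lemma Zi_bound (A : {set V}) (P : {set V}) (q : V -> nat) :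
  A = [set x in P | ~~ Rleb (INR (q x)) t] ->
  INR #|A| * t <= INR (\sum_(x in P) q x).
Proof.
move=> ->.
eapply Rle_trans; first apply: (@avgR V _ q t).
  by move=> x; rewrite inE => /andP[_ /negbTE/RlebF].
apply: leINR; apply: sum_sub; apply/subsetP=> x; by rewrite inE => /andP[].
Qed.

Lemma Z_bound : 0 <= t ->
  INR #|sZ| * t <= 2 * INR (#|sX g| + #|sY g| + 2 * eXY E (sX g) (sY g)).
Proof.
move=> t0.
have e1 := Zi_bound (erefl Z1).
have e2 := Zi_bound (erefl Z2).
have e3 := Zi_bound (erefl Z3).
have e4 := Zi_bound (erefl Z4).
rewrite sum_swap in e2. rewrite -sum_swap in e4.
have r1 := leINR R1_bound. have r2 := leINR R2_bound.
have cz : (#|sZ| <= #|Z1| + #|Z2| + #|Z3| + #|Z4|)%N.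
  rewrite /sZ; apply: leq_trans (leq_card_setU _ _) _; rewrite leq_add2r.
  apply: leq_trans (leq_card_setU _ _) _; rewrite leq_add2r.
  exact: leq_card_setU.
have hz := leINR cz.
have hz2 := Rmult_le_compat_r t _ _ t0 hz.
rewrite !INRD in hz2 r1 r2. rewrite !INRD. simpl INR; lra.
Qed.

Lemma Z_good x : x \notin sZ ->
  (x \in sX g -> INR (nno E (sX' g) x) <= t) /\
  (x \in sY' g -> INR (nno E (sY g) x) <= t) /\
  (x \in sY g -> INR (nni E (sY' g) x) <= t) /\
  (x \in sX' g -> INR (nni E (sX g) x) <= t).
Proof.
rewrite /sZ /Z1 /Z2 /Z3 /Z4 !inE !negb_or => /andP[/andP[/andP[h1 h2] h3] h4].
split; [|split; [|split]] => hx;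
  [move: h1|move: h2|move: h3|move: h4]; rewrite hx andTb negbK => /RlebP hh; exact: hh.
Qed.

End Struct.

Section Base.
Variables (V : finType) (E : rel V).

Lemma nno_U (f : V -> nat) i j x : i != j ->
  INR (nno E (cls f i :|: cls f j) x) =
  INR #|cls f i| + INR #|cls f j| - INR (dc E f i x) - INR (dc E f j x).
Proof.
move=> ij; have h := dout_nno E (cls f i :|: cls f j) x.
rewrite dout_U // card_U // in h.
have : INR (dc E f i x + dc E f j x + nno E (cls f i :|: cls f j) x) =
       INR (#|cls f i| + #|cls f j|) by rewrite h.
rewrite !INRD; lra.
Qed.

Lemma nni_U (f : V -> nat) i j x : i != j ->
  INR (nni E (cls f i :|: cls f j) x) =
  INR #|cls f i| + INR #|cls f j| - INR (di E f i x) - INR (di E f j x).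
Proof.
move=> ij; have h := din_nni E (cls f i :|: cls f j) x.
rewrite din_U // card_U // in h.
have : INR (di E f i x + di E f j x + nni E (cls f i :|: cls f j) x) =
       INR (#|cls f i| + #|cls f j|) by rewrite h.
rewrite !INRD; lra.
Qed.

Lemma dcR (f : V -> nat) k x : 0 <= INR (dc E f k x) <= INR #|cls f k|.
Proof. split; [exact: pos_INR | apply: leINR; exact: dc_card]. Qed.
Lemma diR (f : V -> nat) k x : 0 <= INR (di E f k x) <= INR #|cls f k|.
Proof. split; [exact: pos_INR | apply: leINR; exact: di_card]. Qed.

Lemma totR (f : V -> nat) : (forall x, f x < 4)%N ->
  nR V = INR #|cls f 0| + INR #|cls f 1| + INR #|cls f 2| + INR #|cls f 3|.
Proof. by move=> h; rewrite /nR (card_tot h) !INRD. Qed.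

Lemma degR (f : V -> nat) x : (forall x, f x < 4)%N ->
  (#|V| <= 2 * dout E setT x)%N -> (#|V| <= 2 * din E setT x)%N ->
  nR V / 2 <= INR (dc E f 0 x) + INR (dc E f 1 x) + INR (dc E f 2 x) + INR (dc E f 3 x) /\
  nR V / 2 <= INR (di E f 0 x) + INR (di E f 1 x) + INR (di E f 2 x) + INR (di E f 3 x).
Proof.
move=> h /leINR h1 /leINR h2.
rewrite (dout_tot E x h) INRM !INRD in h1.
rewrite (din_tot E x h) INRM !INRD in h2.
have I2 : INR 2 = 2 by simpl; lra.
rewrite I2 in h1 h2; rewrite /nR; split; lra.
Qed.

Section P.
Variables (f g : V -> nat) (D : {set V}).
Hypothesis fg : forall x, x \notin D -> f x = g x.
Lemma pertR k x :
  INR (dc E g k x) - INR #|D| <= INR (dc E f k x) <= INR (dc E g k x) + INR #|D| /\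
  INR (di E g k x) - INR #|D| <= INR (di E f k x) <= INR (di E g k x) + INR #|D| /\
  INR #|cls g k| - INR #|D| <= INR #|cls f k| <= INR #|cls g k| + INR #|D|.
Proof.
have gf : forall x, x \notin D -> g x = f x by move=> y /fg ->.
have := leINR (dc_pert E fg k x); have := leINR (dc_pert E gf k x).
have := leINR (di_pert E fg k x); have := leINR (di_pert E gf k x).
have := leINR (card_pert fg k); have := leINR (card_pert gf k).
rewrite !INRD; lra.
Qed.
Lemma pertC k :
  INR #|cls g k| - INR #|D| <= INR #|cls f k| <= INR #|cls g k| + INR #|D|.
Proof.
have gf : forall x, x \notin D -> g x = f x by move=> y /fg ->.
have := leINR (card_pert fg k); have := leINR (card_pert gf k).
rewrite !INRD; lra.
Qed.
End P.

Variables (g : V -> nat) (Z : {set V}) (t : R).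
Hypothesis g4 : forall x, (g x < 4)%N.
Hypothesis goodZ : forall x, x \notin Z ->
  (x \in sX g -> INR (nno E (sX' g) x) <= t) /\
  (x \in sY' g -> INR (nno E (sY g) x) <= t) /\
  (x \in sY g -> INR (nni E (sY' g) x) <= t) /\
  (x \in sX' g -> INR (nni E (sX g) x) <= t).

Let c k := INR #|cls g k|.
Let dO k x := INR (dc E g k x).
Let dI k x := INR (di E g k x).

Lemma good0 x : x \notin Z -> g x = 0%N ->
  c 1 + c 2 - dO 1 x - dO 2 x <= t /\ c 1 + c 3 - dI 1 x - dI 3 x <= t.
Proof.
move=> xZ gx; have [h1 [h2 [h3 h4]]] := goodZ xZ.
rewrite /sX /sY /sX' /sY' !inE gx /= in h1 h2 h3 h4.
have := h1 erefl; have := h3 erefl; rewrite nno_U // nni_U //; rewrite /c /dO /dI; lra.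
Qed.

Lemma good1 x : x \notin Z -> g x = 1%N ->
  c 0 + c 3 - dO 0 x - dO 3 x <= t /\ c 0 + c 2 - dI 0 x - dI 2 x <= t.
Proof.
move=> xZ gx; have [h1 [h2 [h3 h4]]] := goodZ xZ.
rewrite /sX /sY /sX' /sY' !inE gx /= in h1 h2 h3 h4.
have := h2 erefl; have := h4 erefl; rewrite nno_U // nni_U //; rewrite /c /dO /dI; lra.
Qed.

Lemma good2 x : x \notin Z -> g x = 2%N ->
  c 1 + c 2 - dO 1 x - dO 2 x <= t /\ c 0 + c 2 - dI 0 x - dI 2 x <= t.
Proof.
move=> xZ gx; have [h1 [h2 [h3 h4]]] := goodZ xZ.
rewrite /sX /sY /sX' /sY' !inE gx /= in h1 h2 h3 h4.
have := h1 erefl; have := h4 erefl; rewrite nno_U // nni_U //; rewrite /c /dO /dI; lra.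
Qed.

Lemma good3 x : x \notin Z -> g x = 3%N ->
  c 0 + c 3 - dO 0 x - dO 3 x <= t /\ c 1 + c 3 - dI 1 x - dI 3 x <= t.
Proof.
move=> xZ gx; have [h1 [h2 [h3 h4]]] := goodZ xZ.
rewrite /sX /sY /sX' /sY' !inE gx /= in h1 h2 h3 h4.
have := h2 erefl; have := h3 erefl; rewrite nno_U // nni_U //; rewrite /c /dO /dI; lra.
Qed.

End Base.

Lemma halfR (k : nat) :
  INR k / 2 - 1/2 <= INR (k./2) <= INR k / 2 /\
  INR k / 2 <= INR (uphalf k) <= INR k / 2 + 1/2.
Proof.
have h1 := odd_double_half k; rewrite -addnn in h1.
have h2 := uphalf_half k.
have ho : 0 <= INR (odd k) <= 1 by case: (odd k) => /=; lra.
have e1 : INR (odd k) + (INR (k./2) + INR (k./2)) = INR k by rewrite -!INRD h1.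
have e2 : INR (uphalf k) = INR (odd k) + INR (k./2) by rewrite h2 INRD.
lra.
Qed.

Lemma in_cls (V : finType) (f : V -> nat) k x : (x \in cls f k) = (f x == k).
Proof. by rewrite inE. Qed.

Section CaseP.
Variables (V : finType) (E : rel V) (g : V -> nat) (Z : {set V}) (t : R).
Hypothesis g4 : forall x, (g x < 4)%N.
Hypothesis goodZ : forall x, x \notin Z ->
  (x \in sX g -> INR (nno E (sX' g) x) <= t) /\
  (x \in sY' g -> INR (nno E (sY g) x) <= t) /\
  (x \in sY g -> INR (nni E (sY' g) x) <= t) /\
  (x \in sX' g -> INR (nni E (sX g) x) <= t).
Hypothesis dego : forall x, (#|V| <= 2 * dout E setT x)%N.
Hypothesis degi : forall x, (#|V| <= 2 * din E setT x)%N.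
Hypothesis b01 : (#|cls g 0| <= #|cls g 1| + 1)%N.
Hypothesis b10 : (#|cls g 1| <= #|cls g 0| + 1)%N.
Hypothesis b23 : (#|cls g 2| <= #|cls g 3| + 1)%N.
Hypothesis b32 : (#|cls g 3| <= #|cls g 2| + 1)%N.
Variables (eta eps3 tau : R).
Hypothesis heta : 0 < eta <= 1/100.
Hypothesis heps3 : 0 < eps3 <= eta/100.
Hypothesis htau : 0 < tau <= eps3/100.
Hypothesis hn : 100 <= tau * nR V.
Hypothesis ht : 0 <= t <= tau * nR V.
Hypothesis hZ : INR #|Z| <= tau * nR V.
Hypothesis hc0 : INR #|cls g 0| < 2 * tau * nR V + 1.

Definition pP := 2 * eta * nR V.

Definition ruleP x : nat :=
  if Rleb pP (INR (dc E g 2 x)) && Rleb pP (INR (di E g 2 x)) then 2%N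
  else if Rleb pP (INR (dc E g 3 x)) && Rleb pP (INR (di E g 3 x)) then 3%N
  else if Rleb pP (INR (di E g 2 x)) then 1%N else 0%N.

Lemma ruleP_cases x :
  (ruleP x = 2%N -> pP <= INR (dc E g 2 x) /\ pP <= INR (di E g 2 x)) /\
  (ruleP x = 3%N -> pP <= INR (dc E g 3 x) /\ pP <= INR (di E g 3 x)) /\
  (ruleP x = 0%N -> (INR (dc E g 2 x) < pP \/ INR (di E g 2 x) < pP) /\
                    (INR (dc E g 3 x) < pP \/ INR (di E g 3 x) < pP) /\
                    INR (di E g 2 x) < pP) /\
  (ruleP x = 1%N -> (INR (dc E g 2 x) < pP \/ INR (di E g 2 x) < pP) /\
                    (INR (dc E g 3 x) < pP \/ INR (di E g 3 x) < pP) /\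
                    pP <= INR (di E g 2 x)).
Proof.
rewrite /ruleP.
case: (boolP (Rleb pP (INR (dc E g 2 x)))) => [/RlebP h1|/negbTE/RlebF h1];
case: (boolP (Rleb pP (INR (di E g 2 x)))) => [/RlebP h2|/negbTE/RlebF h2];
case: (boolP (Rleb pP (INR (dc E g 3 x)))) => [/RlebP h3|/negbTE/RlebF h3];
case: (boolP (Rleb pP (INR (di E g 3 x)))) => [/RlebP h4|/negbTE/RlebF h4];
rewrite /=; (split; [|split; [|split]]) => // _; repeat split;
  try (by left); try (by right); auto.
Qed.

Definition DP := cls g 0 :|: cls g 1 :|: Z.
Definition fP x := if x \in DP then ruleP x else g x.

Lemma fP4 x : (fP x < 4)%N.
Proof. rewrite /fP /ruleP; case: ifP => _ //; by repeat case: ifP. Qed.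

Lemma fPg x : x \notin DP -> fP x = g x.
Proof. by rewrite /fP => /negbTE ->. Qed.

Lemma outDP x : x \notin DP -> x \notin Z /\ (g x = 2%N \/ g x = 3%N).
Proof.
rewrite /DP !inE !negb_or => /andP[/andP[h0 h1] hz]; split => //.
move: (g4 x) h0 h1; case: (g x) => [|[|[|[|k]]]] //; auto.
Qed.

Lemma DP_card : (#|DP| <= #|cls g 0| + #|cls g 1| + #|Z|)%N.
Proof.
rewrite /DP; apply: leq_trans (leq_card_setU _ _) _; rewrite leq_add2r.
exact: leq_card_setU.
Qed.


Lemma fP_class x k : fP x = k ->
  (x \in DP /\ ruleP x = k) \/
  (x \notin DP /\ x \notin Z /\ g x = k /\ (k = 2%N \/ k = 3%N)).
Proof.
case xD: (x \in DP); first by rewrite /fP xD; left.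
rewrite fPg ?xD // => gk; right; have [] := outDP (negbT xD).
by rewrite gk => ?; split.
Qed.

Lemma caseP : exists A B S T : {set V},
  partition4 A B S T /\ condP E A B S T eps3 eta.
Proof.
exists (cls fP 0), (cls fP 1), (cls fP 2), (cls fP 3); split.
  exact: part_cls fP4.
have Hn := totR g4.
have Hn' := totR fP4.
have hD := leINR DP_card; rewrite !INRD in hD.
have pc0 := pertC fPg 0. have pc1 := pertC fPg 1.
have pc2 := pertC fPg 2. have pc3 := pertC fPg 3.
have hb1 := leINR b01. have hb2 := leINR b10.
have hb3 := leINR b23. have hb4 := leINR b32.
rewrite !INRD /= in hb1 hb2 hb3 hb4.
have := (pos_INR #|cls g 0|, pos_INR #|cls g 1|, pos_INR #|cls g 2|, pos_INR #|cls g 3|).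
have := (pos_INR #|cls fP 0|, pos_INR #|cls fP 1|, pos_INR #|cls fP 2|, pos_INR #|cls fP 3|).
have := (pos_INR #|DP|, pos_INR #|Z|).
move=> [? ?] [[[? ?] ?] ?] [[[? ?] ?] ?].
have npos : 0 <= nR V by exact: pos_INR.
have s1 : tau * nR V <= eps3 * nR V / 100.
  have := Rmult_le_compat_r (nR V) _ _ npos (proj2 htau); lra.
have s2 : eps3 * nR V <= eta * nR V / 100.
  have := Rmult_le_compat_r (nR V) _ _ npos (proj2 heps3); lra.
have s3 : eta * nR V <= nR V / 100.
  have := Rmult_le_compat_r (nR V) _ _ npos (proj2 heta); lra.
have hm : INR #|DP| <= 6 * tau * nR V by lra.
have [hh1 hh2] := halfR #|V|. rewrite -/(nR V) in hh1 hh2.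
rewrite /condP.
have hnt : 1 <= tau * nR V / 100 by lra.
split. lra. split. lra.
have VF : forall x,
  (INR (dc E g 0 x) - INR #|DP| <= INR (dc E fP 0 x) <= INR (dc E g 0 x) + INR #|DP| /\
  INR (di E g 0 x) - INR #|DP| <= INR (di E fP 0 x) <= INR (di E g 0 x) + INR #|DP| /\
  INR #|cls g 0| - INR #|DP| <= INR #|cls fP 0| <= INR #|cls g 0| + INR #|DP|) /\
  (INR (dc E g 1 x) - INR #|DP| <= INR (dc E fP 1 x) <= INR (dc E g 1 x) + INR #|DP| /\
  INR (di E g 1 x) - INR #|DP| <= INR (di E fP 1 x) <= INR (di E g 1 x) + INR #|DP| /\
  INR #|cls g 1| - INR #|DP| <= INR #|cls fP 1| <= INR #|cls g 1| + INR #|DP|) /\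
  (INR (dc E g 2 x) - INR #|DP| <= INR (dc E fP 2 x) <= INR (dc E g 2 x) + INR #|DP| /\
  INR (di E g 2 x) - INR #|DP| <= INR (di E fP 2 x) <= INR (di E g 2 x) + INR #|DP| /\
  INR #|cls g 2| - INR #|DP| <= INR #|cls fP 2| <= INR #|cls g 2| + INR #|DP|) /\
  (INR (dc E g 3 x) - INR #|DP| <= INR (dc E fP 3 x) <= INR (dc E g 3 x) + INR #|DP| /\
  INR (di E g 3 x) - INR #|DP| <= INR (di E fP 3 x) <= INR (di E g 3 x) + INR #|DP| /\
  INR #|cls g 3| - INR #|DP| <= INR #|cls fP 3| <= INR #|cls g 3| + INR #|DP|) /\
  (nR V / 2 <= INR (dc E g 0 x) + INR (dc E g 1 x) + INR (dc E g 2 x) + INR (dc E g 3 x) /\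
   nR V / 2 <= INR (di E g 0 x) + INR (di E g 1 x) + INR (di E g 2 x) + INR (di E g 3 x)) /\
  (0 <= INR (dc E g 0 x) <= INR #|cls g 0|) /\ (0 <= INR (dc E g 1 x) <= INR #|cls g 1|) /\
  (0 <= INR (dc E g 2 x) <= INR #|cls g 2|) /\ (0 <= INR (dc E g 3 x) <= INR #|cls g 3|) /\
  (0 <= INR (di E g 0 x) <= INR #|cls g 0|) /\ (0 <= INR (di E g 1 x) <= INR #|cls g 1|) /\
  (0 <= INR (di E g 2 x) <= INR #|cls g 2|) /\ (0 <= INR (di E g 3 x) <= INR #|cls g 3|).
  move=> x; split; first exact: (pertR E fPg).
  split; first exact: (pertR E fPg). split; first exact: (pertR E fPg). split; first exact: (pertR E fPg).
  split; first exact: degR.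
  split; [exact: dcR|]. split; [exact: dcR|]. split; [exact: dcR|].
  split; [exact: dcR|]. split; [exact: diR|]. split; [exact: diR|].
  split; [exact: diR|]. exact: diR.
split.
  move=> x; rewrite in_cls => /eqP /fP_class [[xD r]|[xD [xZ [gx _]]]];
    change (eta * nR V <= INR (dc E fP 2 x) /\ eta * nR V <= INR (di E fP 2 x));
    have := VF x.
  - have [h2 _] := ruleP_cases x; have := h2 r; unfold pP in *; lra.
  - have := good2 goodZ xZ gx; lra.
split.
  move=> x; rewrite in_cls => /eqP /fP_class [[xD r]|[xD [xZ [gx _]]]];
    change (eta * nR V <= INR (dc E fP 3 x) /\ eta * nR V <= INR (di E fP 3 x));
    have := VF x.
  - have [_ [h3 _]] := ruleP_cases x; have := h3 r; unfold pP in *; lra.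
  - have := good3 goodZ xZ gx; lra.
have hI : forall k, INR #|cls fP k :&: DP| <= INR #|DP|.
  by move=> k; apply: leINR; apply: subset_leq_card; exact: subsetIr.
split.
  exists (cls fP 2 :&: DP); split; first exact: subsetIl.
  split; first by have := hI 2%N; lra.
  move=> x hx hY; have xD : x \notin DP by move: hY; rewrite inE hx.
  move: hx; rewrite in_cls => /eqP /fP_class [[xD' _]|[_ [xZ [gx _]]]];
    first by rewrite xD' in xD.
  change (nR V / 2 - eps3 * nR V <= INR (dc E fP 2 x) /\ nR V / 2 - eps3 * nR V <= INR (di E fP 2 x)).
  have := VF x; have := good2 goodZ xZ gx; lra.
split.
  exists (cls fP 3 :&: DP); split; first exact: subsetIl.
  split; first by have := hI 3%N; lra.
  move=> x hx hY; have xD : x \notin DP by move: hY; rewrite inE hx.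
  move: hx; rewrite in_cls => /eqP /fP_class [[xD' _]|[_ [xZ [gx _]]]];
    first by rewrite xD' in xD.
  change (nR V / 2 - eps3 * nR V <= INR (dc E fP 3 x) /\ nR V / 2 - eps3 * nR V <= INR (di E fP 3 x)).
  have := VF x; have := good3 goodZ xZ gx; lra.
split.
  have : (#|cls fP 0 :|: cls fP 1| <= #|DP|)%N.
    apply: subset_leq_card; apply/subsetP=> x; rewrite in_setU !in_cls => h.
    apply/negPn/negP => xD; have [_ gx] := outDP xD; move: h; rewrite fPg //.
    by case: gx => ->.
  rewrite card_U // => /leINR; rewrite INRD; lra.
split.
  move=> x; rewrite in_cls => /eqP /fP_class [[xD r]|[_ [_ [_ []]]] //].
  change ((nR V / 2 - 3 * eta * nR V < INR (di E fP 3 x)) /\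
     (nR V / 2 - 3 * eta * nR V < INR (dc E fP 2 x)) /\
     (INR (di E fP 2 x) <= 3 * eta * nR V) /\
     (INR (dc E fP 3 x) <= 3 * eta * nR V)).
  have [_ [_ [h0 _]]] := ruleP_cases x; have [[c1|c1] [[c2|c2] c3]] := h0 r;
  have := VF x; unfold pP in *; lra.
move=> x; rewrite in_cls => /eqP /fP_class [[xD r]|[_ [_ [_ []]]] //].
change ((nR V / 2 - 3 * eta * nR V < INR (di E fP 2 x)) /\
   (nR V / 2 - 3 * eta * nR V < INR (dc E fP 3 x)) /\
   (INR (di E fP 3 x) <= 3 * eta * nR V) /\
   (INR (dc E fP 2 x) <= 3 * eta * nR V)).
have [_ [_ [_ h1]]] := ruleP_cases x; have [[c1|c1] [[c2|c2] c3]] := h1 r;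
have := VF x; unfold pP in *; lra.
Qed.

End CaseP.

Section Move.
Variables (V : finType) (E : rel V).

Definition mv (h : V -> nat) (v : V) (j : nat) := fun x => if x == v then j else h x.

Lemma mv_out h v j x : x \notin [set v] -> mv h v j x = h x.
Proof. by rewrite inE /mv => /negbTE ->. Qed.

Lemma mv_card h v j l :
  (#|cls (mv h v j) l| + (h v == l) = #|cls h l| + (j == l))%N.
Proof.
rewrite !cardT_sum (bigD1 v) //= [X in (_ = X + _)%N](bigD1 v) //=.
rewrite !inE /mv eqxx.
have -> : (\sum_(i | i != v) ((i \in cls (fun x => if x == v then j else h x) l) : nat) =
          \sum_(i | i != v) ((i \in cls h l) : nat))%N.
  by apply: eq_bigr => y /negbTE yv; rewrite !inE yv.
lia.
Qed.

Lemma bipA h x : h x = 0%N ->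
  #|[set y in cls h 0 :|: cls h 1 | bip_rel E (cls h 0) (cls h 1) x y]| = dc E h 1 x /\
  #|[set y in cls h 0 :|: cls h 1 | bip_rel E (cls h 0) (cls h 1) y x]| = di E h 1 x.
Proof.
move=> hx; split; apply: eq_card => y; rewrite !inE /bip_rel !inE hx /=;
  case: (h y) => [|[|k]] /=; rewrite ?andbF ?andbT //.
Qed.

Lemma bipB h x : h x = 1%N ->
  #|[set y in cls h 0 :|: cls h 1 | bip_rel E (cls h 0) (cls h 1) x y]| = dc E h 0 x /\
  #|[set y in cls h 0 :|: cls h 1 | bip_rel E (cls h 0) (cls h 1) y x]| = di E h 0 x.
Proof.
move=> hx; split; apply: eq_card => y; rewrite !inE /bip_rel !inE hx /=;
  case: (h y) => [|[|k]] /=; rewrite ?andbF ?andbT ?orbF //.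
Qed.

End Move.

Lemma all_but_weak (V : finType) (X : {set V}) k k' (P P' : V -> Prop) :
  all_but X k P -> k <= k' -> (forall x, x \in X -> P x -> P' x) -> all_but X k' P'.
Proof.
move=> [Y [sY [cY hY]]] kk' PP'; exists Y; split => //; split; first lra.
move=> x xX xY; apply: PP' => //; exact: hY.
Qed.

Section Balance.
Variables (V : finType) (E : rel V).
Variables (eps3 Kmax W W2 M L U : R).
Hypothesis hK : 0 <= Kmax /\ Kmax + 1 <= 3 * nR V / 100.
Hypothesis hW : W <= eps3 * nR V.
Hypothesis hW2 : W2 <= eps3 * nR V.
Hypothesis hM : nR V / 2 - eps3 * nR V <= M.
Hypothesis hL : nR V / 2 - eps3 * nR V <= L.
Hypothesis hU : U <= nR V / 2 + eps3 * nR V.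

Definition cc (cl : nat) (h : V -> nat) (d : R) x :=
  (cl = 0%N -> d <= INR (dout E (cls h 1) x) /\ d <= INR (din E (cls h 1) x)) /\
  (cl = 1%N -> d <= INR (dout E (cls h 0) x) /\ d <= INR (din E (cls h 0) x)) /\
  (cl = 2%N -> d <= INR (din E (cls h 0) x) /\ d <= INR (dout E (cls h 1) x)) /\
  (cl = 3%N -> d <= INR (din E (cls h 1) x) /\ d <= INR (dout E (cls h 0) x)).
Definition ccond (h : V -> nat) (d : R) x := cc (h x) h d x.

Definition QI (h : V -> nat) (k : nat) :=
  (forall x, h x < 4)%N /\ (#|cls h 0| + k = #|cls h 1|)%N /\ INR k <= Kmax /\
  L <= INR #|cls h 0| /\ INR #|cls h 1| <= U /\
  (forall x, ccond h (nR V / 50 + INR k) x) /\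
  INR #|cls h 2| + INR #|cls h 3| + INR k <= W /\
  all_but (cls h 0) (W2 - INR k) (fun x => dpm_ge E (cls h 1) x (M + INR k)) /\
  all_but (cls h 1) (W2 - INR k) (fun x => dpm_ge E (cls h 0) x (M + INR k)).

Definition Q8P (h : V -> nat) :=
  (forall x, h x = 1%N -> INR (dout E (cls h 1) x) < nR V / 20 /\ INR (din E (cls h 1) x) < nR V / 20) /\
  (forall x, h x = 2%N -> INR (din E (cls h 1) x) < nR V / 20) /\
  (forall x, h x = 3%N -> INR (dout E (cls h 1) x) < nR V / 20).

Lemma QI_final h k : QI h k -> (k = 0%N \/ Q8P h) ->
  condQ E (cls h 0) (cls h 1) (cls h 2) (cls h 3) eps3 /\ (#|cls h 0| <= #|cls h 1|)%N.
Proof.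
move=> [h4 [hk [hKk [hLa [hUb [hc [hst [hA hB]]]]]]]] hfin.
have [hh1 hh2] := halfR #|V|. rewrite -/(nR V) in hh1 hh2.
have k0 := pos_INR k.
have hab : INR #|cls h 0| + INR k = INR #|cls h 1| by rewrite -INRD hk.
have := (pos_INR #|cls h 2|, pos_INR #|cls h 3|); move=> [? ?].
split; last by rewrite -hk leq_addr.
rewrite /condQ.
split; first lra. split; first lra.
split.
  move=> x; rewrite in_setU !in_cls => /orP[] /eqP hx.
    have [-> ->] := bipA E hx; have [hc0 _] := hc x; have := hc0 hx; rewrite /dc /di; lra.
  have [-> ->] := bipB E hx; have [_ [hc1 _]] := hc x; have := hc1 hx; rewrite /dc /di; lra.
split.
  apply: all_but_weak hA _ _; first lra.
  by move=> x _ [p1 p2]; split; lra.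
split.
  apply: all_but_weak hB _ _; first lra.
  by move=> x _ [p1 p2]; split; lra.
split; first lra.
split.
  move=> x; rewrite in_cls => /eqP hx; have [_ [_ [hc2 _]]] := hc x; have := hc2 hx; lra.
split.
  move=> x; rewrite in_cls => /eqP hx; have [_ [_ [_ hc3]]] := hc x; have := hc3 hx; lra.
move=> hlt; case: hfin => [k0'|[q1 [q2 q3]]].
  by rewrite k0' /= in hab; lra.
split; [|split] => x; rewrite in_cls => /eqP hx; [exact: q1|exact: q2|exact: q3].
Qed.


Lemma cc_pert cl (h h' : V -> nat) v d x :
  (forall y, y \notin [set v] -> h' y = h y) ->
  cc cl h (d + 1) x -> cc cl h' d x.
Proof.
move=> hh' [c0 [c1 [c2 c3]]].
have q0 := pertR E hh' 0 x; have q1 := pertR E hh' 1 x.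
rewrite cards1 /dc /di /= in q0 q1.
split; [|split; [|split]] => e;
  [have := c0 e|have := c1 e|have := c2 e|have := c3 e]; lra.
Qed.

Lemma QI_move h k v j :
  QI h k.+1 ->
  ((h v = 1%N /\ (j = 2%N \/ j = 3%N)) \/ ((h v = 2%N \/ h v = 3%N) /\ j = 0%N)) ->
  cc j h (nR V / 50 + INR k + 1) v ->
  QI (mv h v j) k.
Proof.
move=> [h4 [hk [hKk [hLa [hUb [hc [hst [hA hB]]]]]]]] hvj hcv.
have m0 := mv_card h v j 0; have m1 := mv_card h v j 1.
have m2 := mv_card h v j 2; have m3 := mv_card h v j 3.
rewrite S_INR in hKk hst.
have k0 := pos_INR k.
have e0 : (#|cls (mv h v j) 0| + k = #|cls (mv h v j) 1|)%N.
  by case: hvj => [[hv [ej|ej]]|[[hv|hv] ej]]; subst j; rewrite hv in m0 m1 m2 m3; lia.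
have ca : (#|cls h 0| <= #|cls (mv h v j) 0|)%N.
  by case: hvj => [[hv [ej|ej]]|[[hv|hv] ej]]; subst j; rewrite hv in m0 m1 m2 m3; lia.
have cb : (#|cls (mv h v j) 1| <= #|cls h 1|)%N.
  by case: hvj => [[hv [ej|ej]]|[[hv|hv] ej]]; subst j; rewrite hv in m0 m1 m2 m3; lia.
have cst : (#|cls (mv h v j) 2| + #|cls (mv h v j) 3| <= #|cls h 2| + #|cls h 3| + 1)%N.
  by case: hvj => [[hv [ej|ej]]|[[hv|hv] ej]]; subst j; rewrite hv in m0 m1 m2 m3; lia.
set h' := mv h v j in e0 ca cb cst *.
have hh' : forall y, y \notin [set v] -> h' y = h y by move=> y; exact: mv_out.
have j4 : (j < 4)%N by case: hvj => [[_ [->|->]]|[_ ->]].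
have := leINR ca; have := leINR cb; have := leINR cst; rewrite !INRD /= => cst' cb' ca'.
split.
  by move=> x; rewrite /h' /mv; case: (x == v).
split; first exact: e0.
split; first lra.
split; first lra.
split; first lra.
split.
  move=> x; rewrite /ccond; case xv: (x == v).
    have -> : h' x = j by rewrite /h' /mv xv.
    move/eqP: xv => ->; apply: (cc_pert hh'); exact: hcv.
  have -> : h' x = h x by rewrite /h' /mv xv.
  apply: (cc_pert hh'); have := hc x; rewrite /ccond S_INR.
  by have -> : nR V / 50 + (INR k + 1) = nR V / 50 + INR k + 1 by lra.
split; first lra.
split.
  case: hA => [Y [sY [cY hY]]].
  exists ((Y :|: [set v]) :&: cls h' 0); split; first exact: subsetIr.
  split.
    have := leINR (subset_leq_card (subsetIl (Y :|: [set v]) (cls h' 0))).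
    have := leINR (leq_card_setU Y [set v]); rewrite cards1 INRD /=.
    rewrite S_INR in cY; lra.
  move=> x xA xY; have xv : x != v.
    apply/negP => /eqP e; move: xY; rewrite inE xA andbT in_setU e set11 orbT //.
  have hx : h' x = h x by rewrite /h' /mv (negbTE xv).
  have xA0 : x \in cls h 0 by rewrite in_cls -hx -in_cls.
  have xY0 : x \notin Y by move: xY; rewrite in_setI xA andbT in_setU negb_or => /andP[].
  have [p1 p2] := hY x xA0 xY0.
  have q1 := pertR E hh' 1 x; rewrite cards1 /dc /di /= in q1.
  rewrite S_INR in p1 p2; split; lra.
case: hB => [Y [sY [cY hY]]].
exists (Y :&: cls h' 1); split; first exact: subsetIr.
split.
  have := leINR (subset_leq_card (subsetIl Y (cls h' 1))).
  rewrite S_INR in cY; lra.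
move=> x xB xY; have xv : x != v.
  apply/negP => /eqP e; move: xB; rewrite in_cls e /h' /mv eqxx.
  by case: hvj => [[_ [->|->]]|[_ ->]].
have hx : h' x = h x by rewrite /h' /mv (negbTE xv).
have xB0 : x \in cls h 1 by rewrite in_cls -hx -in_cls.
have xY0 : x \notin Y by move: xY; rewrite in_setI xB andbT.
have [p1 p2] := hY x xB0 xY0.
have q0 := pertR E hh' 0 x; rewrite cards1 /dc /di /= in q0.
rewrite S_INR in p1 p2; split; lra.
Qed.

Lemma balance k : forall h, QI h k -> exists h', (forall x, h' x < 4)%N /\
  condQ E (cls h' 0) (cls h' 1) (cls h' 2) (cls h' 3) eps3 /\ (#|cls h' 0| <= #|cls h' 1|)%N.
Proof.
elim: k => [|k IH] h HI.
  exists h; split; first exact: (proj1 HI).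
  exact: QI_final HI (or_introl erefl).
case: (classic (Q8P h)) => q8.
  exists h; split; first exact: (proj1 HI).
  exact: QI_final HI (or_intror q8).
have [v hv] : exists v,
  (h v = 1%N /\ nR V / 20 <= INR (dout E (cls h 1) v)) \/
  (h v = 1%N /\ nR V / 20 <= INR (din E (cls h 1) v)) \/
  (h v = 2%N /\ nR V / 20 <= INR (din E (cls h 1) v)) \/
  (h v = 3%N /\ nR V / 20 <= INR (dout E (cls h 1) v)).
  apply: NNPP => hne; apply: q8.
  split.
    move=> x hx; split; apply: Rnot_le_lt => hle; apply: hne; exists x; tauto.
  split.
    move=> x hx; apply: Rnot_le_lt => hle; apply: hne; exists x; tauto.
  move=> x hx; apply: Rnot_le_lt => hle; apply: hne; exists x; tauto.
have HI' := HI.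
case: HI' => [_ [_ [hKk [_ [_ [hc _]]]]]].
have [c0 [c1 [c2 c3]]] := hc v.
rewrite S_INR in hKk c0 c1 c2 c3.
have k0 := pos_INR k.
have hd : nR V / 50 + INR k + 1 <= nR V / 20 by lra.
case: hv => [[hv1 hb]|[[hv1 hb]|[[hv1 hb]|[hv1 hb]]]].
- have [p1 p2] := c1 hv1.
  have hcv : cc 2%N h (nR V / 50 + INR k + 1) v.
    rewrite /cc; split; [|split; [|split]] => // _; split; lra.
  have [h' hh'] := IH _ (QI_move HI (or_introl (conj hv1 (or_introl erefl))) hcv); by exists h'.
- have [p1 p2] := c1 hv1.
  have hcv : cc 3%N h (nR V / 50 + INR k + 1) v.
    rewrite /cc; split; [|split; [|split]] => // _; split; lra.
  have [h' hh'] := IH _ (QI_move HI (or_introl (conj hv1 (or_intror erefl))) hcv); by exists h'.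
- have [p1 p2] := c2 hv1.
  have hcv : cc 0%N h (nR V / 50 + INR k + 1) v.
    rewrite /cc; split; [|split; [|split]] => // _; split; lra.
  have [h' hh'] := IH _ (QI_move HI (or_intror (conj (or_introl hv1) erefl)) hcv); by exists h'.
- have [p1 p2] := c3 hv1.
  have hcv : cc 0%N h (nR V / 50 + INR k + 1) v.
    rewrite /cc; split; [|split; [|split]] => // _; split; lra.
  have [h' hh'] := IH _ (QI_move HI (or_intror (conj (or_intror hv1) erefl)) hcv); by exists h'.
Qed.

End Balance.

Definition sw (k : nat) : nat :=
  if k == 0%N then 1%N else if k == 1%N then 0%N else if k == 2%N then 3%N
  else if k == 3%N then 2%N else k.

Section Swap.
Variables (V : finType) (E : rel V).

Lemma cls_sw (h : V -> nat) :
  cls (fun x => sw (h x)) 0 = cls h 1 /\ cls (fun x => sw (h x)) 1 = cls h 0 /\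
  cls (fun x => sw (h x)) 2 = cls h 3 /\ cls (fun x => sw (h x)) 3 = cls h 2.
Proof.
split; [|split; [|split]]; apply/setP => x; rewrite !inE /sw;
  case: (h x) => [|[|[|[|k]]]] //=.
Qed.

Definition Qpre (tau : R) (h : V -> nat) :=
  (forall x, h x < 4)%N /\
  nR V / 2 - 9 * tau * nR V <= INR #|cls h 0| <= nR V / 2 + 7 * tau * nR V /\
  nR V / 2 - 9 * tau * nR V <= INR #|cls h 1| <= nR V / 2 + 7 * tau * nR V /\
  (forall x, ccond E h (nR V / 40 - 6 * tau * nR V) x) /\
  INR #|cls h 2| + INR #|cls h 3| <= 6 * tau * nR V /\
  all_but (cls h 0) (6 * tau * nR V) (fun x => dpm_ge E (cls h 1) x (nR V / 2 - 10 * tau * nR V)) /\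
  all_but (cls h 1) (6 * tau * nR V) (fun x => dpm_ge E (cls h 0) x (nR V / 2 - 10 * tau * nR V)).

Lemma Qpre_swap tau h : Qpre tau h -> Qpre tau (fun x => sw (h x)).
Proof.
have [e0 [e1 [e2 e3]]] := cls_sw h.
move=> [h4 [ha [hb [hc [hst [hA hB]]]]]].
rewrite /Qpre e0 e1 e2 e3.
split.
  by move=> x; rewrite /sw; move: (h4 x); case: (h x) => [|[|[|[|k]]]].
split; first exact: hb. split; first exact: ha.
split; last by split; [lra|split].
move=> x; have := hc x; rewrite /ccond /cc e0 e1 /sw.
move: (h4 x); case: (h x) => [|[|[|[|k]]]] //= _ [c0 [c1 [c2 c3]]];
  (split; [|split; [|split]]) => // _;
  solve [exact: (c0 erefl) | exact: (c1 erefl) | exact: (c2 erefl) | exact: (c3 erefl)].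
Qed.

Lemma Qpre_QI tau h : 0 < tau -> 0 <= nR V -> 10000 * (tau * nR V) <= nR V ->
  Qpre tau h -> (#|cls h 0| <= #|cls h 1|)%N ->
  QI E (16 * tau * nR V) (22 * tau * nR V) (22 * tau * nR V)
    (nR V / 2 - 26 * tau * nR V) (nR V / 2 - 9 * tau * nR V)
    (nR V / 2 + 7 * tau * nR V) h (#|cls h 1| - #|cls h 0|).
Proof.
move=> tau0 n0 tsm [h4 [ha [hb [hc [hst [hA hB]]]]]] hab.
have ek : (#|cls h 0| + (#|cls h 1| - #|cls h 0|) = #|cls h 1|)%N by lia.
have ek' : INR #|cls h 0| + INR (#|cls h 1| - #|cls h 0|) = INR #|cls h 1|
  by rewrite -INRD ek.
have k0 := pos_INR (#|cls h 1| - #|cls h 0|).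
have tn : 0 <= tau * nR V by apply: Rmult_le_pos; lra.
split; first exact: h4.
split; first exact: ek.
split; first lra.
split; first lra.
split; first lra.
split.
  move=> x; have [c0 [c1 [c2 c3]]] := hc x.
  split; [|split; [|split]] => e;
    [have := c0 e|have := c1 e|have := c2 e|have := c3 e]; lra.
split; first lra.
split.
  apply: all_but_weak hA _ _; first lra.
  by move=> x _ [p1 p2]; split; lra.
apply: all_but_weak hB _ _; first lra.
by move=> x _ [p1 p2]; split; lra.
Qed.

End Swap.

Section CaseQ.
Variables (V : finType) (E : rel V) (g : V -> nat) (Z : {set V}) (t : R).
Hypothesis g4 : forall x, (g x < 4)%N.
Hypothesis goodZ : forall x, x \notin Z ->
  (x \in sX g -> INR (nno E (sX' g) x) <= t) /\
  (x \in sY' g -> INR (nno E (sY g) x) <= t) /\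
  (x \in sY g -> INR (nni E (sY' g) x) <= t) /\
  (x \in sX' g -> INR (nni E (sX g) x) <= t).
Hypothesis dego : forall x, (#|V| <= 2 * dout E setT x)%N.
Hypothesis degi : forall x, (#|V| <= 2 * din E setT x)%N.
Hypothesis b01 : (#|cls g 0| <= #|cls g 1| + 1)%N.
Hypothesis b10 : (#|cls g 1| <= #|cls g 0| + 1)%N.
Hypothesis b23 : (#|cls g 2| <= #|cls g 3| + 1)%N.
Hypothesis b32 : (#|cls g 3| <= #|cls g 2| + 1)%N.
Variables (eps3 tau : R).
Hypothesis heps3 : 0 < eps3 <= 1/10000.
Hypothesis htau : 0 < tau <= eps3/100.
Hypothesis hn : 100 <= tau * nR V.
Hypothesis ht : 0 <= t <= tau * nR V.
Hypothesis hZ : INR #|Z| <= tau * nR V.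
Hypothesis hc2 : INR #|cls g 2| < 2 * tau * nR V + 1.

Definition qQ := nR V / 40.

Definition ruleQ x : nat :=
  if Rleb qQ (INR (dc E g 1 x)) && Rleb qQ (INR (di E g 1 x)) then 0%N
  else if Rleb qQ (INR (dc E g 0 x)) && Rleb qQ (INR (di E g 0 x)) then 1%N
  else if Rleb qQ (INR (di E g 0 x)) then 2%N else 3%N.

Lemma ruleQ_cases x :
  (ruleQ x = 0%N -> qQ <= INR (dc E g 1 x) /\ qQ <= INR (di E g 1 x)) /\
  (ruleQ x = 1%N -> qQ <= INR (dc E g 0 x) /\ qQ <= INR (di E g 0 x)) /\
  (ruleQ x = 2%N -> (INR (dc E g 1 x) < qQ \/ INR (di E g 1 x) < qQ) /\
                    (INR (dc E g 0 x) < qQ \/ INR (di E g 0 x) < qQ) /\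
                    qQ <= INR (di E g 0 x)) /\
  (ruleQ x = 3%N -> (INR (dc E g 1 x) < qQ \/ INR (di E g 1 x) < qQ) /\
                    (INR (dc E g 0 x) < qQ \/ INR (di E g 0 x) < qQ) /\
                    INR (di E g 0 x) < qQ).
Proof.
rewrite /ruleQ.
case: (boolP (Rleb qQ (INR (dc E g 1 x)))) => [/RlebP h1|/negbTE/RlebF h1];
case: (boolP (Rleb qQ (INR (di E g 1 x)))) => [/RlebP h2|/negbTE/RlebF h2];
case: (boolP (Rleb qQ (INR (dc E g 0 x)))) => [/RlebP h3|/negbTE/RlebF h3];
case: (boolP (Rleb qQ (INR (di E g 0 x)))) => [/RlebP h4|/negbTE/RlebF h4];
rewrite /=; (split; [|split; [|split]]) => // _; repeat split;
  try (by left); try (by right); auto.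
Qed.

Definition DQ := cls g 2 :|: cls g 3 :|: Z.
Definition fQ x := if x \in DQ then ruleQ x else g x.

Lemma fQ4 x : (fQ x < 4)%N.
Proof. rewrite /fQ /ruleQ; case: ifP => _ //; by repeat case: ifP. Qed.

Lemma fQg x : x \notin DQ -> fQ x = g x.
Proof. by rewrite /fQ => /negbTE ->. Qed.

Lemma outDQ x : x \notin DQ -> x \notin Z /\ (g x = 0%N \/ g x = 1%N).
Proof.
rewrite /DQ !inE !negb_or => /andP[/andP[h0 h1] hz]; split => //.
move: (g4 x) h0 h1; case: (g x) => [|[|[|[|k]]]] //; auto.
Qed.

Lemma DQ_card : (#|DQ| <= #|cls g 2| + #|cls g 3| + #|Z|)%N.
Proof.
rewrite /DQ; apply: leq_trans (leq_card_setU _ _) _; rewrite leq_add2r.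
exact: leq_card_setU.
Qed.

Lemma fQ_class x k : fQ x = k ->
  (x \in DQ /\ ruleQ x = k) \/
  (x \notin DQ /\ x \notin Z /\ g x = k /\ (k = 0%N \/ k = 1%N)).
Proof.
case xD: (x \in DQ); first by rewrite /fQ xD; left.
rewrite fQg ?xD // => gk; right; have [] := outDQ (negbT xD).
by rewrite gk => ?; split.
Qed.

Lemma fQ_pre : Qpre E tau fQ.
Proof.
have Hn := totR g4.
have hD := leINR DQ_card; rewrite !INRD in hD.
have pc0 := pertC fQg 0. have pc1 := pertC fQg 1.
have pc2 := pertC fQg 2. have pc3 := pertC fQg 3.
have hb1 := leINR b01. have hb2 := leINR b10.
have hb3 := leINR b23. have hb4 := leINR b32.
rewrite !INRD /= in hb1 hb2 hb3 hb4.
have := (pos_INR #|cls g 0|, pos_INR #|cls g 1|, pos_INR #|cls g 2|, pos_INR #|cls g 3|).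
have := (pos_INR #|cls fQ 0|, pos_INR #|cls fQ 1|, pos_INR #|cls fQ 2|, pos_INR #|cls fQ 3|).
have := (pos_INR #|DQ|, pos_INR #|Z|).
move=> [? ?] [[[? ?] ?] ?] [[[? ?] ?] ?].
have npos : 0 <= nR V by exact: pos_INR.
have s1 : tau * nR V <= eps3 * nR V / 100.
  have := Rmult_le_compat_r (nR V) _ _ npos (proj2 htau); lra.
have s2 : eps3 * nR V <= nR V / 10000.
  have := Rmult_le_compat_r (nR V) _ _ npos (proj2 heps3); lra.
have hm : INR #|DQ| <= 6 * tau * nR V by lra.
have VF : forall x,
  (INR (dc E g 0 x) - INR #|DQ| <= INR (dc E fQ 0 x) <= INR (dc E g 0 x) + INR #|DQ| /\
  INR (di E g 0 x) - INR #|DQ| <= INR (di E fQ 0 x) <= INR (di E g 0 x) + INR #|DQ| /\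
  INR #|cls g 0| - INR #|DQ| <= INR #|cls fQ 0| <= INR #|cls g 0| + INR #|DQ|) /\
  (INR (dc E g 1 x) - INR #|DQ| <= INR (dc E fQ 1 x) <= INR (dc E g 1 x) + INR #|DQ| /\
  INR (di E g 1 x) - INR #|DQ| <= INR (di E fQ 1 x) <= INR (di E g 1 x) + INR #|DQ| /\
  INR #|cls g 1| - INR #|DQ| <= INR #|cls fQ 1| <= INR #|cls g 1| + INR #|DQ|) /\
  (nR V / 2 <= INR (dc E g 0 x) + INR (dc E g 1 x) + INR (dc E g 2 x) + INR (dc E g 3 x) /\
   nR V / 2 <= INR (di E g 0 x) + INR (di E g 1 x) + INR (di E g 2 x) + INR (di E g 3 x)) /\
  (0 <= INR (dc E g 0 x) <= INR #|cls g 0|) /\ (0 <= INR (dc E g 1 x) <= INR #|cls g 1|) /\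
  (0 <= INR (dc E g 2 x) <= INR #|cls g 2|) /\ (0 <= INR (dc E g 3 x) <= INR #|cls g 3|) /\
  (0 <= INR (di E g 0 x) <= INR #|cls g 0|) /\ (0 <= INR (di E g 1 x) <= INR #|cls g 1|) /\
  (0 <= INR (di E g 2 x) <= INR #|cls g 2|) /\ (0 <= INR (di E g 3 x) <= INR #|cls g 3|).
  move=> x; split; first exact: (pertR E fQg).
  split; first exact: (pertR E fQg).
  split; first exact: degR.
  split; [exact: dcR|]. split; [exact: dcR|]. split; [exact: dcR|].
  split; [exact: dcR|]. split; [exact: diR|]. split; [exact: diR|].
  split; [exact: diR|]. exact: diR.
split; first exact: fQ4.
split; first lra.
split; first lra.
split.
  move=> x; rewrite /ccond /cc.
  have := VF x; rewrite /dc /di => V1.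
  have [r0 [r1 [r2 r3]]] := ruleQ_cases x.
  rewrite /dc /di /qQ in r0 r1 r2 r3.
  move Ek: (fQ x) => k; case/fQ_class: Ek => [[xD r]|[xD [xZ [gx hk]]]].
    rewrite -r; split; [|split; [|split]] => e.
    - have := r0 e; lra.
    - have := r1 e; lra.
    - have [[c1|c1] [[c2|c2] c3]] := r2 e; lra.
    - have [[c1|c1] [[c2|c2] c3]] := r3 e; lra.
  case: hk => ek; rewrite {}ek in gx *.
    have := good0 goodZ xZ gx; rewrite /dc /di => G.
    split; [|split; [|split]] => // _; lra.
  have := good1 goodZ xZ gx; rewrite /dc /di => G.
  split; [|split; [|split]] => // _; lra.
split.
  have : (#|cls fQ 2 :|: cls fQ 3| <= #|DQ|)%N.
    apply: subset_leq_card; apply/subsetP=> x; rewrite in_setU !in_cls => h.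
    apply/negPn/negP => xD; have [_ gx] := outDQ xD; move: h; rewrite fQg //.
    by case: gx => ->.
  rewrite card_U // => /leINR; rewrite INRD; lra.
have hI : forall k, INR #|cls fQ k :&: DQ| <= INR #|DQ|.
  by move=> k; apply: leINR; apply: subset_leq_card; exact: subsetIr.
split.
  exists (cls fQ 0 :&: DQ); split; first exact: subsetIl.
  split; first by have := hI 0%N; lra.
  move=> x hx hY; have xD : x \notin DQ by move: hY; rewrite inE hx.
  move: hx; rewrite in_cls => /eqP /fQ_class [[xD' _]|[_ [xZ [gx _]]]];
    first by rewrite xD' in xD.
  have := VF x; have := good0 goodZ xZ gx; rewrite /dpm_ge /dc /di; lra.
exists (cls fQ 1 :&: DQ); split; first exact: subsetIl.
split; first by have := hI 1%N; lra.
move=> x hx hY; have xD : x \notin DQ by move: hY; rewrite inE hx.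
move: hx; rewrite in_cls => /eqP /fQ_class [[xD' _]|[_ [xZ [gx _]]]];
  first by rewrite xD' in xD.
have := VF x; have := good1 goodZ xZ gx; rewrite /dpm_ge /dc /di; lra.
Qed.

Lemma caseQ : exists A B S T : {set V},
  partition4 A B S T /\ (condQ E A B S T eps3 /\ (#|A| <= #|B|)%N).
Proof.
have npos : 0 <= nR V by exact: pos_INR.
have s1 : tau * nR V <= eps3 * nR V / 100.
  have := Rmult_le_compat_r (nR V) _ _ npos (proj2 htau); lra.
have s2 : eps3 * nR V <= nR V / 10000.
  have := Rmult_le_compat_r (nR V) _ _ npos (proj2 heps3); lra.
have tsm : 10000 * (tau * nR V) <= nR V by lra.
have hK : 0 <= 16 * tau * nR V /\ 16 * tau * nR V + 1 <= 3 * nR V / 100 by lra.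
have hW : 22 * tau * nR V <= eps3 * nR V by lra.
have hM : nR V / 2 - eps3 * nR V <= nR V / 2 - 26 * tau * nR V by lra.
have hL : nR V / 2 - eps3 * nR V <= nR V / 2 - 9 * tau * nR V by lra.
have hU : nR V / 2 + 7 * tau * nR V <= nR V / 2 + eps3 * nR V by lra.
have tau0 : 0 < tau by lra.
have [h [QI0 ab]] : exists h, Qpre E tau h /\ (#|cls h 0| <= #|cls h 1|)%N.
  case: (leqP #|cls fQ 0| #|cls fQ 1|) => ab.
    by exists fQ; split => //; exact: fQ_pre.
  exists (fun x => sw (fQ x)); split; first exact: Qpre_swap fQ_pre.
  have [-> [-> _]] := cls_sw fQ; exact: ltnW.
have HI := Qpre_QI tau0 npos tsm QI0 ab.
have [h' [h4 [cQ ab']]] := balance hK hW hW hM hL hU HI.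
exists (cls h' 0), (cls h' 1), (cls h' 2), (cls h' 3); split; first exact: part_cls.
by split.
Qed.

End CaseQ.

Section CaseR.
Variables (V : finType) (E : rel V) (g : V -> nat) (Z : {set V}) (t : R).
Hypothesis g4 : forall x, (g x < 4)%N.
Hypothesis goodZ : forall x, x \notin Z ->
  (x \in sX g -> INR (nno E (sX' g) x) <= t) /\
  (x \in sY' g -> INR (nno E (sY g) x) <= t) /\
  (x \in sY g -> INR (nni E (sY' g) x) <= t) /\
  (x \in sX' g -> INR (nni E (sX g) x) <= t).
Hypothesis dego : forall x, (#|V| <= 2 * dout E setT x)%N.
Hypothesis degi : forall x, (#|V| <= 2 * din E setT x)%N.
Hypothesis b01 : (#|cls g 0| <= #|cls g 1| + 1)%N.
Hypothesis b10 : (#|cls g 1| <= #|cls g 0| + 1)%N.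
Hypothesis b23 : (#|cls g 2| <= #|cls g 3| + 1)%N.
Hypothesis b32 : (#|cls g 3| <= #|cls g 2| + 1)%N.
Variables (eps eps1 eta1 tau r : R).
Hypothesis hr : Rpower eps (1/3) = r.
Hypothesis heta1 : 0 < eta1 /\ 100 * (eta1 * nR V) <= tau * nR V.
Hypothesis heps1 : 0 < eps1 /\ eps1 * nR V <= eta1 * nR V.
Hypothesis hn : 100 <= eta1 * nR V.
Hypothesis ht : 0 <= t /\ t + 4 * INR #|Z| <= r * nR V /\ t <= eta1 * nR V.
Hypothesis hZ : 1 + 2 * INR #|Z| <= eps1 * nR V.
Hypothesis hc : 2 * tau * nR V <= INR #|cls g 0| /\ 2 * tau * nR V <= INR #|cls g 1| /\
                2 * tau * nR V <= INR #|cls g 2| /\ 2 * tau * nR V <= INR #|cls g 3|.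

Definition pR := 2 * eta1 * nR V.

Definition ruleR x : nat :=
  if Rleb pR (INR (dc E g 1 x) + INR (dc E g 2 x)) && Rleb pR (INR (di E g 0 x) + INR (di E g 2 x)) then 2%N
  else if Rleb pR (INR (dc E g 0 x) + INR (dc E g 3 x)) && Rleb pR (INR (di E g 1 x) + INR (di E g 3 x)) then 3%N
  else if Rleb pR (INR (dc E g 1 x)) && Rleb pR (INR (di E g 1 x)) then 0%N else 1%N.

Lemma ruleR_cases x :
  (ruleR x = 2%N -> pR <= INR (dc E g 1 x) + INR (dc E g 2 x) /\ pR <= INR (di E g 0 x) + INR (di E g 2 x)) /\
  (ruleR x = 3%N -> pR <= INR (dc E g 0 x) + INR (dc E g 3 x) /\ pR <= INR (di E g 1 x) + INR (di E g 3 x)) /\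
  (ruleR x = 0%N -> pR <= INR (dc E g 1 x) /\ pR <= INR (di E g 1 x)) /\
  (ruleR x = 1%N -> (INR (dc E g 1 x) + INR (dc E g 2 x) < pR \/ INR (di E g 0 x) + INR (di E g 2 x) < pR) /\
                    (INR (dc E g 0 x) + INR (dc E g 3 x) < pR \/ INR (di E g 1 x) + INR (di E g 3 x) < pR) /\
                    (INR (dc E g 1 x) < pR \/ INR (di E g 1 x) < pR)).
Proof.
rewrite /ruleR.
case: (boolP (Rleb pR (INR (dc E g 1 x) + INR (dc E g 2 x)))) => [/RlebP h1|/negbTE/RlebF h1];
case: (boolP (Rleb pR (INR (di E g 0 x) + INR (di E g 2 x)))) => [/RlebP h2|/negbTE/RlebF h2];
case: (boolP (Rleb pR (INR (dc E g 0 x) + INR (dc E g 3 x)))) => [/RlebP h3|/negbTE/RlebF h3];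
case: (boolP (Rleb pR (INR (di E g 1 x) + INR (di E g 3 x)))) => [/RlebP h4|/negbTE/RlebF h4];
case: (boolP (Rleb pR (INR (dc E g 1 x)))) => [/RlebP h5|/negbTE/RlebF h5];
case: (boolP (Rleb pR (INR (di E g 1 x)))) => [/RlebP h6|/negbTE/RlebF h6];
rewrite /=; (split; [|split; [|split]]) => // _; repeat split;
  try (by left); try (by right); auto.
Qed.

Definition fR x := if x \in Z then ruleR x else g x.

Lemma fR4 x : (fR x < 4)%N.
Proof. rewrite /fR /ruleR; case: ifP => _ //; by repeat case: ifP. Qed.

Lemma fRg x : x \notin Z -> fR x = g x.
Proof. by rewrite /fR => /negbTE ->. Qed.

Lemma fR_class x k : fR x = k ->
  (x \in Z /\ ruleR x = k) \/ (x \notin Z /\ g x = k).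
Proof.
case xD: (x \in Z); first by rewrite /fR xD; left.
by rewrite fRg ?xD // => gk; right.
Qed.

Lemma caseR : exists A B S T : {set V},
  partition4 A B S T /\ condR E A B S T eps eps1 eta1 tau.
Proof.
exists (cls fR 0), (cls fR 1), (cls fR 2), (cls fR 3); split.
  exact: part_cls fR4.
have Hn := totR g4.
have pc0 := pertC fRg 0. have pc1 := pertC fRg 1.
have pc2 := pertC fRg 2. have pc3 := pertC fRg 3.
have hb1 := leINR b01. have hb2 := leINR b10.
have hb3 := leINR b23. have hb4 := leINR b32.
rewrite !INRD /= in hb1 hb2 hb3 hb4.
have := (pos_INR #|cls g 0|, pos_INR #|cls g 1|, pos_INR #|cls g 2|, pos_INR #|cls g 3|).
have := (pos_INR #|cls fR 0|, pos_INR #|cls fR 1|, pos_INR #|cls fR 2|, pos_INR #|cls fR 3|).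
have := pos_INR #|Z|.
move=> ? [[[? ?] ?] ?] [[[? ?] ?] ?].
have VF : forall x,
  (INR (dc E g 0 x) - INR #|Z| <= INR (dc E fR 0 x) <= INR (dc E g 0 x) + INR #|Z| /\
  INR (di E g 0 x) - INR #|Z| <= INR (di E fR 0 x) <= INR (di E g 0 x) + INR #|Z| /\
  INR #|cls g 0| - INR #|Z| <= INR #|cls fR 0| <= INR #|cls g 0| + INR #|Z|) /\
  (INR (dc E g 1 x) - INR #|Z| <= INR (dc E fR 1 x) <= INR (dc E g 1 x) + INR #|Z| /\
  INR (di E g 1 x) - INR #|Z| <= INR (di E fR 1 x) <= INR (di E g 1 x) + INR #|Z| /\
  INR #|cls g 1| - INR #|Z| <= INR #|cls fR 1| <= INR #|cls g 1| + INR #|Z|) /\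
  (INR (dc E g 2 x) - INR #|Z| <= INR (dc E fR 2 x) <= INR (dc E g 2 x) + INR #|Z| /\
  INR (di E g 2 x) - INR #|Z| <= INR (di E fR 2 x) <= INR (di E g 2 x) + INR #|Z| /\
  INR #|cls g 2| - INR #|Z| <= INR #|cls fR 2| <= INR #|cls g 2| + INR #|Z|) /\
  (INR (dc E g 3 x) - INR #|Z| <= INR (dc E fR 3 x) <= INR (dc E g 3 x) + INR #|Z| /\
  INR (di E g 3 x) - INR #|Z| <= INR (di E fR 3 x) <= INR (di E g 3 x) + INR #|Z| /\
  INR #|cls g 3| - INR #|Z| <= INR #|cls fR 3| <= INR #|cls g 3| + INR #|Z|) /\
  (nR V / 2 <= INR (dc E g 0 x) + INR (dc E g 1 x) + INR (dc E g 2 x) + INR (dc E g 3 x) /\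
   nR V / 2 <= INR (di E g 0 x) + INR (di E g 1 x) + INR (di E g 2 x) + INR (di E g 3 x)) /\
  (0 <= INR (dc E g 0 x) <= INR #|cls g 0|) /\ (0 <= INR (dc E g 1 x) <= INR #|cls g 1|) /\
  (0 <= INR (dc E g 2 x) <= INR #|cls g 2|) /\ (0 <= INR (dc E g 3 x) <= INR #|cls g 3|) /\
  (0 <= INR (di E g 0 x) <= INR #|cls g 0|) /\ (0 <= INR (di E g 1 x) <= INR #|cls g 1|) /\
  (0 <= INR (di E g 2 x) <= INR #|cls g 2|) /\ (0 <= INR (di E g 3 x) <= INR #|cls g 3|).
  move=> x; split; first exact: (pertR E fRg).
  split; first exact: (pertR E fRg). split; first exact: (pertR E fRg).
  split; first exact: (pertR E fRg).
  split; first exact: degR.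
  split; [exact: dcR|]. split; [exact: dcR|]. split; [exact: dcR|].
  split; [exact: dcR|]. split; [exact: diR|]. split; [exact: diR|].
  split; [exact: diR|]. exact: diR.
have hI : forall k, INR #|cls fR k :&: Z| <= INR #|Z|.
  by move=> k; apply: leINR; apply: subset_leq_card; exact: subsetIr.
rewrite /condR; cbv zeta; rewrite hr.
split; first lra. split; first lra. split; first lra. split; first lra.
split; first by apply: Rabs_le; lra.
split; first by apply: Rabs_le; lra.
split.
  move=> x; rewrite in_setU !in_cls => /orP[] /eqP hx.
    have [-> ->] := bipA E hx; have := VF x; unfold pR in *.
    case/fR_class: hx => [[xZ r0]|[xZ gx]].
      have [_ [_ [h0 _]]] := ruleR_cases x; have := h0 r0; unfold pR; lra.
    have := good0 goodZ xZ gx; lra.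
  have [-> ->] := bipB E hx; have := VF x; unfold pR in *.
  case/fR_class: hx => [[xZ r0]|[xZ gx]].
    have [_ [_ [_ h1]]] := ruleR_cases x; have [[c1|c1] [[c2|c2] [c3|c3]]] := h1 r0;
    unfold pR in *; lra.
  have := good1 goodZ xZ gx; lra.
split.
  move=> x; rewrite in_cls => /eqP hx; rewrite !dout_U // !din_U // !INRD.
  have := VF x; case/fR_class: hx => [[xZ r0]|[xZ gx]].
    have [h2 _] := ruleR_cases x; have := h2 r0; unfold pR; lra.
  have := good2 goodZ xZ gx; lra.
split.
  move=> x; rewrite in_cls => /eqP hx; rewrite !dout_U // !din_U // !INRD.
  have := VF x; case/fR_class: hx => [[xZ r0]|[xZ gx]].
    have [_ [h3 _]] := ruleR_cases x; have := h3 r0; unfold pR; lra.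
  have := good3 goodZ xZ gx; lra.
split.
  exists (cls fR 0 :&: Z); split; first exact: subsetIl.
  split; first by have := hI 0%N; lra.
  move=> x hx hY; have xD : x \notin Z by move: hY; rewrite inE hx.
  move: hx; rewrite in_cls => /eqP /fR_class [[xD' _]|[_ gx]]; first by rewrite xD' in xD.
  have := VF x; have := good0 goodZ xD gx; rewrite /dpm_ge /dc /di; lra.
split.
  exists (cls fR 1 :&: Z); split; first exact: subsetIl.
  split; first by have := hI 1%N; lra.
  move=> x hx hY; have xD : x \notin Z by move: hY; rewrite inE hx.
  move: hx; rewrite in_cls => /eqP /fR_class [[xD' _]|[_ gx]]; first by rewrite xD' in xD.
  have := VF x; have := good1 goodZ xD gx; rewrite /dpm_ge /dc /di; lra.
split.
  exists (cls fR 2 :&: Z); split; first exact: subsetIl.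
  split; first by have := hI 2%N; lra.
  move=> x hx hY; have xD : x \notin Z by move: hY; rewrite inE hx.
  rewrite !dout_U // !din_U // !INRD.
  move: hx; rewrite in_cls => /eqP /fR_class [[xD' _]|[_ gx]]; first by rewrite xD' in xD.
  have := VF x; have := good2 goodZ xD gx; lra.
exists (cls fR 3 :&: Z); split; first exact: subsetIl.
split; first by have := hI 3%N; lra.
move=> x hx hY; have xD : x \notin Z by move: hY; rewrite inE hx.
rewrite !dout_U // !din_U // !INRD.
move: hx; rewrite in_cls => /eqP /fR_class [[xD' _]|[_ gx]]; first by rewrite xD' in xD.
have := VF x; have := good3 goodZ xD gx; lra.
Qed.


End CaseR.

Unset Implicit Arguments.

Lemma bal_nat (a b : nat) : Rabs (INR a - INR b) <= 1 -> (a <= b + 1)%N /\ (b <= a + 1)%N.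
Proof.
move=> h.
have h1 : INR a - INR b <= 1 by apply: Rle_trans (Rle_abs _) h.
have h2 : INR b - INR a <= 1 by rewrite Rabs_minus_sym in h; apply: Rle_trans (Rle_abs _) h.
split; apply/leP; apply: INR_le; rewrite INRD /=; lra.
Qed.

Lemma rpow_facts (eps c : R) : 0 < eps -> 0 < c -> eps <= c ^ 3 ->
  0 < Rpower eps (1/3) /\ Rpower eps (1/3) ^ 3 = eps /\ Rpower eps (1/3) <= c.
Proof.
move=> e0 c0 ec.
have r0 : 0 < Rpower eps (1/3) by rewrite /Rpower; apply: exp_pos.
have r3 : Rpower eps (1/3) ^ 3 = eps.
  rewrite -Rpower_pow // Rpower_mult.
  have -> : 1 / 3 * INR 3 = 1 by simpl; field.
  exact: Rpower_1.
split => //; split => //.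
set r := Rpower eps (1/3) in r0 r3 *.
apply: Rnot_lt_le => hlt.
have : c ^ 3 < r ^ 3.
  have q1 : c * c < r * r by apply: Rmult_le_0_lt_compat; lra.
  have q2 : c * c * c < r * r * r.
    apply: Rmult_le_0_lt_compat => //; try lra.
    apply: Rmult_le_pos; lra.
  simpl; lra.
lra.
Qed.

Theorem proposition4p5 :
  exists h2 : R, (0 < h2) /\ forall eta2 : R, (0 < eta2 <= h2) ->
  exists h3 : R, (0 < h3) /\ forall eps3 : R, (0 < eps3 <= h3) ->
  exists ht : R, (0 < ht) /\ forall tau : R, (0 < tau <= ht) ->
  exists h1 : R, (0 < h1) /\ forall eta1 : R, (0 < eta1 <= h1) ->
  exists he1 : R, (0 < he1) /\ forall eps1 : R, (0 < eps1 <= he1) ->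
  exists he : R, (0 < he) /\ forall eps : R, (0 < eps <= he) ->
  exists N : nat, forall (V : finType) (E : rel V),
    (N <= #|V|)%N ->
    irreflexive E ->
    extremal E eps ->
    min_semideg_ge [set: V] E (nR V / 2) ->
    exists A B S T : {set V},
      partition4 A B S T /\
      (condP E A B S T eps3 eta2 \/
       (condQ E A B S T eps3 /\ (#|A| <= #|B|)%N) \/
       condR E A B S T eps eps1 eta1 tau).
Proof.
exists (1/100); split; first lra. move=> eta2 [he2 he2'].
exists (eta2/100); split; first lra. move=> eps3 [he3 he3'].
exists (eps3/100); split; first lra. move=> tau [ht0 ht1].
exists (tau/100); split; first lra. move=> eta1 [hi0 hi1].
exists eta1; split; first lra. move=> eps1 [hj0 hj1].
exists ((eps1/1000)^3); split; first by apply: pow_lt; lra.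
move=> eps [hk0 hk1].
have [N HN] := INR_unbounded (100/eps).
exists N => V E HNV _ ext hdeg.
have npos : 0 < nR V.
  have := leINR HNV; rewrite -/(nR V).
  have : 0 < 100 / eps by apply: Rdiv_lt_0_compat; lra.
  lra.
have scl : forall a b, a <= b -> a * nR V <= b * nR V.
  by move=> a b ab; apply: Rmult_le_compat_r => //; lra.
have en100 : 100 <= eps * nR V.
  have := leINR HNV; rewrite -/(nR V) => hN.
  have : 100 / eps < nR V by lra.
  move=> h; have := Rmult_lt_compat_l eps _ _ hk0 h.
  have -> : eps * (100 / eps) = 100 by field; lra.
  lra.
have c0 : 0 < eps1 / 1000 by lra.
have [r0 [r3 rle]] := rpow_facts eps (eps1/1000) hk0 c0 hk1.
set r := Rpower eps (1/3) in r0 r3 rle.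
case: ext => [A [B [S [T [part [hab [hst he]]]]]]].
have [g [g4 [eA [eB [eS eT]]]]] := part_to_cls part.
subst A B S T.
have [b01 b10] := bal_nat _ _ hab.
have [b23 b32] := bal_nat _ _ hst.
have I2 : INR 2 = 2 by simpl; lra.
have dego : forall x, (#|V| <= 2 * dout E setT x)%N.
  move=> x; have [h1 _] := hdeg x (in_setT x).
  apply/leP; apply: INR_le; rewrite INRM I2 /nR /dout in h1 *. lra.
have degi : forall x, (#|V| <= 2 * din E setT x)%N.
  move=> x; have [_ h1] := hdeg x (in_setT x).
  apply/leP; apply: INR_le; rewrite INRM I2 /nR /din in h1 *. lra.
have rn0 : 0 < r * nR V by apply: Rmult_lt_0_compat.
set t := r * nR V / 4.
have tdef : t = r * nR V / 4 by [].
have t0 : 0 <= t by rewrite /t; lra.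
have hZb := Z_bound g4 b01 b10 b23 b32 dego degi t0.
have goodZ := fun x => @Z_good V E g t x.
set Z := sZ E g t in hZb goodZ.
change (INR (eXY E (sX g) (sY g)) < eps * nR V ^ 2) in he.
have cX : INR #|sX g| <= nR V by apply: leINR; exact: max_card.
have cY : INR #|sY g| <= nR V by apply: leINR; exact: max_card.
rewrite !INRD in hZb. rewrite (_ : INR 0 = 0) in hZb; last by [].
have zpos := pos_INR #|Z|.
have nn : nR V <= eps * nR V ^ 2 / 100.
  have := Rmult_le_compat_r (nR V) _ _ (Rlt_le _ _ npos) en100; simpl; lra.
rewrite -r3 in he nn.
have key : INR #|Z| * (r * nR V) <= (17 * r ^ 2 * nR V) * (r * nR V).
  rewrite /t in hZb. lra.
have zb : INR #|Z| <= 17 * r ^ 2 * nR V by apply: Rmult_le_reg_r key.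
have e1le : eps1 <= 1/1000 by lra.
have g1 : r * r * nR V <= r * nR V / 1000.
  have := Rmult_le_compat_r (r * nR V) r (1/1000) (Rlt_le _ _ rn0) ltac:(lra); lra.
have rn : r * nR V <= eps1 * nR V / 1000.
  have := scl _ _ rle; lra.
simpl in zb.
have hZ1 : INR #|Z| <= eps1 * nR V / 50 by lra.
have e3 : (eps1 / 1000) ^ 3 <= eps1.
  simpl; have : eps1 * eps1 <= 1 by nra. nra.
have s_e : eps * nR V <= eps1 * nR V by apply: scl; lra.
have s1 : eps1 * nR V <= eta1 * nR V by apply: scl; lra.
have s2 : 100 * (eta1 * nR V) <= tau * nR V by have := scl _ _ hi1; lra.
have s3 : 100 * (tau * nR V) <= eps3 * nR V by have := scl _ _ ht1; lra.
have s4 : 100 * (eps3 * nR V) <= eta2 * nR V by have := scl _ _ he3'; lra.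
have hb1 := leINR b01. have hb3 := leINR b23.
rewrite !INRD /= in hb1 hb3.
have caseP' : INR #|cls g 0| < 2 * tau * nR V + 1 ->
  exists A B S T : {set V}, partition4 A B S T /\
    (condP E A B S T eps3 eta2 \/ (condQ E A B S T eps3 /\ (#|A| <= #|B|)%N) \/
     condR E A B S T eps eps1 eta1 tau).
  move=> hc0.
  have [A [B [S [T [p c]]]]] := caseP g4 goodZ dego degi b01 b10 b23 b32
    (conj he2 he2') (conj he3 he3') (conj ht0 ht1) ltac:(lra) ltac:(lra) ltac:(lra) hc0.
  by exists A, B, S, T; split => //; left.
have caseQ' : INR #|cls g 2| < 2 * tau * nR V + 1 ->
  exists A B S T : {set V}, partition4 A B S T /\
    (condP E A B S T eps3 eta2 \/ (condQ E A B S T eps3 /\ (#|A| <= #|B|)%N) \/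
     condR E A B S T eps eps1 eta1 tau).
  move=> hc2.
  have he3s : eps3 <= 1/10000 by lra.
  have [A [B [S [T [p c]]]]] := caseQ g4 goodZ dego degi b01 b10 b23 b32
    (conj he3 he3s) (conj ht0 ht1) ltac:(lra) ltac:(lra) ltac:(lra) hc2.
  by exists A, B, S, T; split => //; right; left.
case: (Rlt_le_dec (INR #|cls g 0|) (2 * tau * nR V)) => c0s.
  apply: caseP'; lra.
case: (Rlt_le_dec (INR #|cls g 1|) (2 * tau * nR V)) => c1s.
  apply: caseP'; lra.
case: (Rlt_le_dec (INR #|cls g 2|) (2 * tau * nR V)) => c2s.
  apply: caseQ'; lra.
case: (Rlt_le_dec (INR #|cls g 3|) (2 * tau * nR V)) => c3s.
  apply: caseQ'; lra.
have hR2 : 100 <= eta1 * nR V by lra.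
have hR3 : 0 <= t /\ t + 4 * INR #|Z| <= r * nR V /\ t <= eta1 * nR V.
  rewrite tdef; split; [lra|split; lra].
have hR4 : 1 + 2 * INR #|Z| <= eps1 * nR V by lra.
have hR5 : 2 * tau * nR V <= INR #|cls g 0| /\ 2 * tau * nR V <= INR #|cls g 1| /\
           2 * tau * nR V <= INR #|cls g 2| /\ 2 * tau * nR V <= INR #|cls g 3| by lra.
have hrr : Rpower eps (1/3) = r by [].
have [A [B [S [T [p c]]]]] := caseR g4 goodZ dego degi b01 b10 b23 b32
  hrr (conj hi0 s2) (conj hj0 s1) hR2 hR3 hR4 hR5.
by exists A, B, S, T; split => //; right; right.
Qed.
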